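(* Let $A,B\in\mathbb{R}_+^{m\times n}$ be a WN-pair, and let $\mathcal{M}(B)$ be the set of all $K\subseteq[n]$ with $|K|=m$ such that $B[[m],K]$ is a monomial matrix. Then $$\rho(A,B)=\min\{\rho(B[[m],K]^{-1}A[[m],K]):K\in\mathcal{M}(B)\}.$$ For each $K\in\mathcal{M}(B)$ attaining this minimum there exists an optimal $\mathbf{y}\in\Pi_n$ with $\operatorname{supp}\mathbf{y}\subseteq K$ that is a GPF-eigenvector, i.e. $A\mathbf{y}=\rho(A,B)B\mathbf{y}$. If moreover the WN-pair is $S$-irreducible, then each such $\mathbf{y}$ is minimal optimal.
   Context: $[m]=\{1,\dots,m\}$; $\Pi_n$ is the set of probability vectors in $\mathbb{R}^n$; $\rho(C)$ is the spectral radius of a square matrix $C$. For $F\in\mathbb{R}^{m\times n}$ and $K\subseteq[n]$, $F[[m],K]$ is the submatrix formed by the columns in $K$. For $A,B\in\mathbb{R}_+^{m\times n}$ and $\mathbf{x}\in\mathbb{R}^n_+\setminus\{\mathbf{0}\}$, $r(A,B,\mathbf{x})=\max_{i\in[m]}\frac{(A\mathbf{x})_i}{(B\mathbf{x})_i}\in[0,\infty]$ (conventions $\frac00=0$, $\frac c0=\infty$ for $c>0$), and $\rho(A,B)=\inf\{r(A,B,\mathbf{x}):\mathbf{x}>\mathbf{0}\}$. A vector $\mathbf{y}\in\mathbb{R}^n_+\setminus\{\mathbf{0}\}$ is optimal if $r(A,B,\mathbf{y})=\rho(A,B)$ and there is a sequence $\mathbf{y}_k>\mathbf{0}$ with $\mathbf{y}_k\to\mathbf{y}$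 and $r(A,B,\mathbf{y}_k)\to\rho(A,B)$; minimal optimal if moreover no optimal vector has support strictly contained in $\operatorname{supp}\mathbf{y}$; a GPF-eigenvector if $A\mathbf{y}=\rho(A,B)B\mathbf{y}$. A pair $A,B\in\mathbb{R}_+^{m\times n}$ is a WN-pair if $n\ge m$, $B$ has no zero row, and each column of $B$ has exactly one positive entry. A square nonnegative matrix is monomial if each row and each column has exactly one positive entry; it is irreducible if the digraph with an edge $i\to j$ iff the $(i,j)$ entry is positive is strongly connected. A WN-pair is $S$-irreducible if for every $K\in\mathcal M(B)$ the matrix $B[[m],K]^{-1}A[[m],K]$ is irreducible. *)

(* Defs.v *)
(* classical reals.  Vectors are functions nat -> R (only the
   indices < n matter), matrices are functions nat -> nat -> R (only indices
   i < m, j < n matter). *)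
From Stdlib Require Import Reals Lra Lia List Relations Sorted ClassicalEpsilon.
Open Scope R_scope.

Fixpoint rsum (k : nat) (f : nat -> R) : R :=
  match k with O => 0 | S k' => rsum k' f + f k' end.

Definition vec := nat -> R.
Definition mat := nat -> nat -> R.

Definition mulv (n : nat) (F : mat) (x : vec) : vec :=
  fun i => rsum n (fun j => F i j * x j).

Definition mulm (k : nat) (M N : mat) : mat :=
  fun i j => rsum k (fun l => M i l * N l j).

Definition idm : mat := fun i j => if Nat.eqb i j then 1 else 0.

Definition is_inverse (k : nat) (M N : mat) : Prop :=
  forall i j, (i < k)%nat -> (j < k)%nat ->
    mulm k M N i j = idm i j /\ mulm k N M i j = idm i j.

(* M^{-1} (meaningful when M is invertible) *)
Definition invm (k : nat) (M : mat) : mat :=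
  epsilon (inhabits (fun _ _ => 0)) (is_inverse k M).

Inductive Rbar := Fin (r : R) | PInf.

Definition Rbar_le (a b : Rbar) : Prop :=
  match a, b with
  | Fin x, Fin y => x <= y
  | _, PInf => True
  | PInf, Fin _ => False
  end.

Definition Rbar_max (a b : Rbar) : Rbar :=
  match a, b with
  | Fin x, Fin y => Fin (Rmax x y)
  | _, _ => PInf
  end.

Definition is_glb_Rbar (S : Rbar -> Prop) (l : Rbar) : Prop :=
  (forall v, S v -> Rbar_le l v) /\
  (forall l', (forall v, S v -> Rbar_le l' v) -> Rbar_le l' l).

Definition Rbar_cv (u : nat -> Rbar) (l : Rbar) : Prop :=
  match l with
  | Fin l0 => forall eps, eps > 0 -> exists N, forall k, (k >= N)%nat ->
                exists v, u k = Fin v /\ Rabs (v - l0) < eps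
  | PInf => forall M, exists N, forall k, (k >= N)%nat ->
                u k = PInf \/ exists v, u k = Fin v /\ v > M
  end.

(* the quotient a/b with conventions 0/0 = 0, c/0 = oo for c > 0 *)
Definition quot (a b : R) : Rbar :=
  if Req_dec_T b 0 then (if Req_dec_T a 0 then Fin 0 else PInf)
  else Fin (a / b).

(* max over i < k of g i (all values are >= 0 in our uses, so the base 0
   is harmless; k >= 1 in the theorem) *)
Fixpoint Rbar_maxn (k : nat) (g : nat -> Rbar) : Rbar :=
  match k with O => Fin 0 | S k' => Rbar_max (Rbar_maxn k' g) (g k') end.

Definition rAB (m n : nat) (A B : mat) (x : vec) : Rbar :=
  Rbar_maxn m (fun i => quot (mulv n A x i) (mulv n B x i)).

Definition vpos (n : nat) (x : vec) : Prop := forall j, (j < n)%nat -> 0 < x j.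
Definition vnonneg (n : nat) (x : vec) : Prop := forall j, (j < n)%nat -> 0 <= x j.
Definition vnonzero (n : nat) (x : vec) : Prop := exists j, (j < n)%nat /\ x j <> 0.

Definition rhoAB (m n : nat) (A B : mat) : Rbar :=
  epsilon (inhabits PInf)
    (is_glb_Rbar (fun v => exists x, vpos n x /\ v = rAB m n A B x)).

Definition in_Pi (n : nat) (y : vec) : Prop := vnonneg n y /\ rsum n y = 1.

Definition optimal (m n : nat) (A B : mat) (y : vec) : Prop :=
  vnonneg n y /\ vnonzero n y /\
  rAB m n A B y = rhoAB m n A B /\
  exists ys : nat -> vec,
    (forall k, vpos n (ys k)) /\
    (forall j, (j < n)%nat -> Un_cv (fun k => ys k j) (y j)) /\
    Rbar_cv (fun k => rAB m n A B (ys k)) (rhoAB m n A B).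

Definition supp_strict_sub (n : nat) (z y : vec) : Prop :=
  (forall j, (j < n)%nat -> z j <> 0 -> y j <> 0) /\
  (exists j, (j < n)%nat /\ y j <> 0 /\ z j = 0).

Definition minimal_optimal (m n : nat) (A B : mat) (y : vec) : Prop :=
  optimal m n A B y /\
  ~ (exists z, optimal m n A B z /\ supp_strict_sub n z y).

Definition GPF_eigenvector (m n : nat) (A B : mat) (y : vec) : Prop :=
  vnonneg n y /\ vnonzero n y /\
  exists r, rhoAB m n A B = Fin r /\
    forall i, (i < m)%nat -> mulv n A y i = r * mulv n B y i.

(* z : nat -> R*R is a complex vector; (a,b) is an eigenvalue of the real
   k x k matrix C *)
Definition is_eigenvalue (k : nat) (C : mat) (a b : R) : Prop :=
  exists z : nat -> R * R,
    (exists i, (i < k)%nat /\ z i <> (0, 0)) /\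
    forall i, (i < k)%nat ->
      rsum k (fun l => C i l * fst (z l)) = a * fst (z i) - b * snd (z i) /\
      rsum k (fun l => C i l * snd (z l)) = a * snd (z i) + b * fst (z i).

Definition is_spectral_radius (k : nat) (C : mat) (r : R) : Prop :=
  (exists a b, is_eigenvalue k C a b /\ r = sqrt (a * a + b * b)) /\
  (forall a b, is_eigenvalue k C a b -> sqrt (a * a + b * b) <= r).

Definition spectral_radius (k : nat) (C : mat) : R :=
  epsilon (inhabits 0) (is_spectral_radius k C).

Definition exactly_one_pos_row (k : nat) (M : mat) (i : nat) : Prop :=
  exists j, (j < k)%nat /\ 0 < M i j /\
    forall j', (j' < k)%nat -> 0 < M i j' -> j' = j.

Definition exactly_one_pos_col (k : nat) (M : mat) (j : nat) : Prop :=
  exists i, (i < k)%nat /\ 0 < M i j /\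
    forall i', (i' < k)%nat -> 0 < M i' j -> i' = i.

Definition monomial (k : nat) (M : mat) : Prop :=
  (forall i j, (i < k)%nat -> (j < k)%nat -> 0 <= M i j) /\
  (forall i, (i < k)%nat -> exactly_one_pos_row k M i) /\
  (forall j, (j < k)%nat -> exactly_one_pos_col k M j).

Definition digraph_edge (k : nat) (M : mat) : relation nat :=
  fun i j => (i < k)%nat /\ (j < k)%nat /\ 0 < M i j.

Definition irreducible (k : nat) (M : mat) : Prop :=
  forall i j, (i < k)%nat -> (j < k)%nat ->
    clos_refl_trans nat (digraph_edge k M) i j.

(* A subset K of [n] (0-based: {0,...,n-1}) is represented by the strictly
   increasing list of its elements. *)
Definition subset_list (n : nat) (K : list nat) : Prop :=
  StronglySorted lt K /\ (forall j, In j K -> (j < n)%nat).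

Definition colsub (F : mat) (K : list nat) : mat :=
  fun i l => F i (nth l K O).

Definition in_MB (m n : nat) (B : mat) (K : list nat) : Prop :=
  subset_list n K /\ length K = m /\ monomial m (colsub B K).

Definition CK (m : nat) (A B : mat) (K : list nat) : mat :=
  mulm m (invm m (colsub B K)) (colsub A K).

Definition WN_pair (m n : nat) (A B : mat) : Prop :=
  (forall i j, (i < m)%nat -> (j < n)%nat -> 0 <= A i j /\ 0 <= B i j) /\
  (m <= n)%nat /\
  (forall i, (i < m)%nat -> exists j, (j < n)%nat /\ B i j <> 0) /\
  (forall j, (j < n)%nat -> exactly_one_pos_col m B j).

Definition S_irreducible (m n : nat) (A B : mat) : Prop :=
  forall K, in_MB m n B K -> irreducible m (CK m A B K).

Definition supp_in (n : nat) (y : vec) (K : list nat) : Prop :=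
  forall j, (j < n)%nat -> y j <> 0 -> In j K.

(* Main.v *)
Require Import Defs.
From Stdlib Require Import Reals Lra Lia List Relations Sorted ClassicalEpsilon Classical FunctionalExtensionality PropExtensionality Rtopology.
Open Scope R_scope.

Lemma rsum_ext k f g : (forall i, (i < k)%nat -> f i = g i) -> rsum k f = rsum k g.
Proof. induction k; simpl; intros; auto. rewrite IHk by (intros; apply H; lia). rewrite H by lia; auto. Qed.

Lemma rsum_plus k f g : rsum k (fun i => f i + g i) = rsum k f + rsum k g.
Proof. induction k; simpl; [lra|]. rewrite IHk; lra. Qed.

Lemma rsum_minus k f g : rsum k (fun i => f i - g i) = rsum k f - rsum k g.
Proof. induction k; simpl; [lra|]. rewrite IHk; lra. Qed.

Lemma rsum_scal k c f : rsum k (fun i => c * f i) = c * rsum k f.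
Proof. induction k; simpl; [lra|]. rewrite IHk; lra. Qed.

Lemma rsum_scalr k c f : rsum k (fun i => f i * c) = rsum k f * c.
Proof. induction k; simpl; [lra|]. rewrite IHk; lra. Qed.

Lemma rsum_zero k f : (forall i, (i < k)%nat -> f i = 0) -> rsum k f = 0.
Proof. induction k; simpl; intros; auto. rewrite IHk by (intros; apply H; lia). rewrite H by lia; lra. Qed.

Lemma rsum_le k f g : (forall i, (i < k)%nat -> f i <= g i) -> rsum k f <= rsum k g.
Proof. induction k; simpl; intros; [lra|]. assert (f k <= g k) by (apply H; lia).
  assert (rsum k f <= rsum k g) by (apply IHk; intros; apply H; lia). lra. Qed.

Lemma rsum_nonneg k f : (forall i, (i < k)%nat -> 0 <= f i) -> 0 <= rsum k f.
Proof. intros. replace 0 with (rsum k (fun _ => 0)). apply rsum_le; auto. apply rsum_zero; auto. Qed.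

Lemma rsum_lt k f g i0 : (i0 < k)%nat -> (forall i, (i < k)%nat -> f i <= g i) -> f i0 < g i0 ->
  rsum k f < rsum k g.
Proof. induction k; simpl; intros; [lia|].
  destruct (Nat.eq_dec i0 k).
  - subst. assert (rsum k f <= rsum k g) by (apply rsum_le; intros; apply H0; lia). lra.
  - assert (rsum k f < rsum k g) by (apply IHk; auto; try lia; intros; apply H0; lia).
    assert (f k <= g k) by (apply H0; lia). lra. Qed.

Lemma rsum_pos k f i0 : (i0 < k)%nat -> (forall i, (i < k)%nat -> 0 <= f i) -> 0 < f i0 -> 0 < rsum k f.
Proof. intros. replace 0 with (rsum k (fun _ => 0)) at 1 by (apply rsum_zero; auto).
  apply rsum_lt with i0; auto. Qed.

Lemma rsum_ge_term k f i0 : (i0 < k)%nat -> (forall i, (i < k)%nat -> 0 <= f i) -> f i0 <= rsum k f.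
Proof. induction k; simpl; intros; [lia|].
  destruct (Nat.eq_dec i0 k).
  - subst. assert (0 <= rsum k f) by (apply rsum_nonneg; intros; apply H0; lia). lra.
  - assert (f i0 <= rsum k f) by (apply IHk; auto; try lia; intros; apply H0; lia).
    assert (0 <= f k) by (apply H0; lia). lra. Qed.

Lemma rsum_single k f l0 : (l0 < k)%nat -> (forall i, (i < k)%nat -> i <> l0 -> f i = 0) -> rsum k f = f l0.
Proof. induction k; simpl; intros; [lia|].
  destruct (Nat.eq_dec l0 k).
  - subst. rewrite rsum_zero; [lra|]. intros; apply H0; lia.
  - rewrite IHk; [|lia|intros; apply H0; lia]. rewrite (H0 k); [lra|lia|auto]. Qed.

Lemma rsum_swap a b (f : nat -> nat -> R) :
  rsum a (fun i => rsum b (fun j => f i j)) = rsum b (fun j => rsum a (fun i => f i j)).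
Proof. induction a; simpl.
  - rewrite rsum_zero; auto.
  - rewrite IHa. rewrite <- rsum_plus. auto. Qed.

Lemma rsum_cv k (u : nat -> nat -> R) (l : nat -> R) :
  (forall i, (i < k)%nat -> Un_cv (fun n => u n i) (l i)) ->
  Un_cv (fun n => rsum k (u n)) (rsum k l).
Proof. induction k; simpl; intros.
  - intros e He. exists O. intros. unfold Rdist. rewrite Rminus_diag, Rabs_R0; auto.
  - apply CV_plus. apply IHk; intros; apply H; lia. apply H; lia. Qed.

Lemma cv_const c : Un_cv (fun _ => c) c.
Proof. intros e He; exists O; intros; unfold Rdist; rewrite Rminus_diag, Rabs_R0; auto. Qed.

Lemma cv_scal c u l : Un_cv u l -> Un_cv (fun n => c * u n) (c * l).
Proof. intros. apply CV_mult; auto. apply cv_const. Qed.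

Lemma cv_ext u v l : (forall n, u n = v n) -> Un_cv u l -> Un_cv v l.
Proof. intros H H1 e He. destruct (H1 e He) as [N HN]. exists N; intros. rewrite <- H; auto. Qed.

Lemma cv_unique u l1 l2 : Un_cv u l1 -> Un_cv u l2 -> l1 = l2.
Proof. intros. eapply UL_sequence; eauto. Qed.

Lemma cv_le u v l1 l2 : (forall n, u n <= v n) -> Un_cv u l1 -> Un_cv v l2 -> l1 <= l2.
Proof. apply Rle_cv_lim. Qed.

Definition incr (phi : nat -> nat) := forall k, (phi k < phi (S k))%nat.

Lemma incr_ge phi : incr phi -> forall k, (k <= phi k)%nat.
Proof. intros H k; induction k; [lia|]. specialize (H k); lia. Qed.

Lemma incr_mono phi : incr phi -> forall a b, (a <= b)%nat -> (phi a <= phi b)%nat.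
Proof. intros H a b Hab; induction Hab; auto. specialize (H m); lia. Qed.

Lemma incr_comp phi psi : incr phi -> incr psi -> incr (fun k => phi (psi k)).
Proof. intros H1 H2 k. specialize (H2 k).
  assert (phi (S (psi k)) <= phi (psi (S k)))%nat by (apply incr_mono; auto).
  specialize (H1 (psi k)); lia. Qed.

Lemma cv_subseq u l phi : incr phi -> Un_cv u l -> Un_cv (fun k => u (phi k)) l.
Proof. intros Hp H e He. destruct (H e He) as [N HN]. exists N. intros k Hk.
  apply HN. pose proof (incr_ge phi Hp k). lia. Qed.

Lemma inv_succ_small e : e > 0 -> exists N, forall k, (k >= N)%nat -> / INR (S k) < e.
Proof. intros. destruct (archimed_cor1 e H) as [N [HN1 HN2]].
  exists N. intros k Hk. apply Rle_lt_trans with (/ INR N); auto.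
  apply Rinv_le_contravar. apply lt_0_INR; lia. apply le_INR; lia. Qed.

Lemma cv_inv_succ : Un_cv (fun k => / INR (S k)) 0.
Proof. intros e He. destruct (inv_succ_small e He) as [N HN]. exists N; intros.
  unfold Rdist. rewrite Rminus_0_r. rewrite Rabs_right. apply HN; auto.
  apply Rle_ge, Rlt_le, Rinv_0_lt_compat. apply lt_0_INR; lia. Qed.

Lemma bw1 (u : nat -> R) : (forall k, 0 <= u k <= 1) ->
  exists phi l, incr phi /\ Un_cv (fun k => u (phi k)) l.
Proof.
  intros Hu. destruct (Bolzano_Weierstrass u (fun c => 0 <= c <= 1) (compact_P3 0 1) Hu) as [l Hl].
  assert (G : forall N k : nat, {p : nat | (N <= p)%nat /\ Rabs (u p - l) < / INR (S k)}).
  { intros N k. apply constructive_indefinite_description.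
    assert (Hp : 0 < / INR (S k)) by (apply Rinv_0_lt_compat, lt_0_INR; lia).
    destruct (Hl (fun y => Rabs (y - l) < / INR (S k)) N) as [p Hp2].
    { exists (mkposreal _ Hp). intros y Hy. unfold disc in Hy. simpl in Hy. auto. }
    exists p; auto. }
  set (phi := fix f k := match k with O => proj1_sig (G O O) | S k' => proj1_sig (G (S (f k')) k) end).
  exists phi, l. split.
  - intros k. pose proof (proj2_sig (G (S (phi k)) (S k))) as [Hp1 _].
    change (phi (S k)) with (proj1_sig (G (S (phi k)) (S k))). lia.
  - assert (Hb : forall k, Rabs (u (phi k) - l) < / INR (S k)).
    { intros [|k]. exact (proj2 (proj2_sig (G 0%nat 0%nat))).
      exact (proj2 (proj2_sig (G (S (phi k)) (S k)))). }
    intros e He. destruct (inv_succ_small e He) as [N HN]. exists N. intros k Hk.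
    unfold Rdist. specialize (Hb k). specialize (HN k Hk). lra.
Qed.

Lemma bwvec (n : nat) (u : nat -> nat -> R) : (forall k j, (j < n)%nat -> 0 <= u k j <= 1) ->
  exists phi (v : nat -> R), incr phi /\ forall j, (j < n)%nat -> Un_cv (fun k => u (phi k) j) (v j).
Proof.
  induction n; intros Hu.
  - exists (fun k => k), (fun _ => 0). split; [intros k; lia|]. intros; lia.
  - destruct IHn as [phi [v [Hp Hv]]]. { intros; apply Hu; lia. }
    destruct (bw1 (fun k => u (phi k) n)) as [psi [l [Hq Hl]]]. { intros; apply Hu; lia. }
    exists (fun k => phi (psi k)), (fun j => if Nat.eq_dec j n then l else v j). split.
    + apply incr_comp; auto.
    + intros j Hj. destruct (Nat.eq_dec j n).
      * subst. auto.
      * apply (cv_subseq (fun k => u (phi k) j)); auto. apply Hv; lia.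
Qed.

Definition mnonneg (k : nat) (M : mat) := forall i l, (i < k)%nat -> (l < k)%nat -> 0 <= M i l.
Definition mpos (k : nat) (M : mat) := forall i l, (i < k)%nat -> (l < k)%nat -> 0 < M i l.

Definition Scw (k : nat) (M : mat) (t : R) : Prop :=
  exists z, vpos k z /\ forall i, (i < k)%nat -> mulv k M z i <= t * z i.

Definition is_glb (S : R -> Prop) (c : R) : Prop :=
  (forall t, S t -> c <= t) /\ (forall c', (forall t, S t -> c' <= t) -> c' <= c).

Definition cw (k : nat) (M : mat) : R := epsilon (inhabits 0) (is_glb (Scw k M)).

Lemma glb_exists (S : R -> Prop) : (exists t, S t) -> (forall t, S t -> 0 <= t) -> exists c, is_glb S c.
Proof.
  intros [t0 Ht0] Hlb.
  destruct (completeness (fun x => S (- x))) as [m [Hm1 Hm2]].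
  - exists 0. intros x Hx. specialize (Hlb _ Hx). lra.
  - exists (- t0). rewrite Ropp_involutive; auto.
  - exists (- m). split.
    + intros t Ht. assert (- t <= m) by (apply Hm1; rewrite Ropp_involutive; auto). lra.
    + intros c' Hc'. assert (m <= - c'). { apply Hm2. intros x Hx. specialize (Hc' _ Hx). lra. } lra.
Qed.

Lemma mulv_le k M x y i : (i < k)%nat -> mnonneg k M -> (forall l, (l < k)%nat -> x l <= y l) ->
  mulv k M x i <= mulv k M y i.
Proof. intros. unfold mulv. apply rsum_le. intros. apply Rmult_le_compat_l; auto. Qed.

Lemma mulv_nonneg k M x i : (i < k)%nat -> mnonneg k M -> vnonneg k x -> 0 <= mulv k M x i.
Proof. intros. unfold mulv. apply rsum_nonneg. intros. apply Rmult_le_pos; auto. Qed.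

Lemma mulv_scal k M c x i : mulv k M (fun l => c * x l) i = c * mulv k M x i.
Proof. unfold mulv. rewrite <- rsum_scal. apply rsum_ext. intros; ring. Qed.

Lemma Scw_nonempty k M : mnonneg k M -> exists t, Scw k M t.
Proof. intros HM. exists (rsum k (fun i => rsum k (fun l => M i l))). exists (fun _ => 1). split.
  - intros j _; lra.
  - intros i Hi. rewrite Rmult_1_r. unfold mulv.
    apply Rle_trans with (rsum k (fun l => M i l)). right; apply rsum_ext; intros; ring.
    apply (rsum_ge_term k (fun i => rsum k (fun l => M i l))); auto.
    intros. apply rsum_nonneg; intros; apply HM; auto. Qed.

Lemma Scw_ge0 k M t : (1 <= k)%nat -> mnonneg k M -> Scw k M t -> 0 <= t.
Proof. intros Hk HM [z [Hz H]]. specialize (H O ltac:(lia)).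
  pose proof (mulv_nonneg k M z O ltac:(lia) HM ltac:(intros j Hj; apply Rlt_le, Hz; auto)).
  specialize (Hz O ltac:(lia)). nra. Qed.

Lemma cw_glb k M : (1 <= k)%nat -> mnonneg k M -> is_glb (Scw k M) (cw k M).
Proof. intros. unfold cw. apply epsilon_spec. apply glb_exists. apply Scw_nonempty; auto.
  intros; eapply Scw_ge0; eauto. Qed.

Lemma cw_le k M t : (1 <= k)%nat -> mnonneg k M -> Scw k M t -> cw k M <= t.
Proof. intros. apply (proj1 (cw_glb k M H H0)); auto. Qed.

Lemma cw_approx k M e : (1 <= k)%nat -> mnonneg k M -> e > 0 -> exists t, Scw k M t /\ t < cw k M + e.
Proof. intros. apply NNPP. intro Hn. pose proof (proj2 (cw_glb k M H H0) (cw k M + e)). 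
  assert (cw k M + e <= cw k M). { apply H2. intros t Ht. apply Rnot_lt_le. intro. apply Hn. exists t; auto. }
  lra. Qed.

Lemma cw_ge0 k M : (1 <= k)%nat -> mnonneg k M -> 0 <= cw k M.
Proof. intros. apply (proj2 (cw_glb k M H H0)). intros; eapply Scw_ge0; eauto. Qed.

Lemma Scw_mono k M t t' : Scw k M t -> t <= t' -> Scw k M t'.
Proof. intros [z [Hz H]] Ht. exists z; split; auto. intros i Hi. specialize (H i Hi). specialize (Hz i Hi). nra. Qed.

Lemma mulv_ext k M M' x x' i : (i < k)%nat -> (forall l, (l < k)%nat -> M i l = M' i l) ->
  (forall l, (l < k)%nat -> x l = x' l) -> mulv k M x i = mulv k M' x' i.
Proof. intros. unfold mulv. apply rsum_ext. intros. rewrite H0, H1; auto. Qed.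

Lemma cw_ext k M M' : (forall i l, (i < k)%nat -> (l < k)%nat -> M i l = M' i l) -> cw k M = cw k M'.
Proof. intros. unfold cw. replace (Scw k M) with (Scw k M'); auto. apply functional_extensionality. intros t.
  apply propositional_extensionality. unfold Scw. split; intros [z [Hz H1]]; exists z; split; auto;
  intros i Hi; rewrite <- H1 by auto; right; apply mulv_ext; auto; intros; rewrite H; auto. Qed.

Lemma finite_strict k (f : nat -> R) c : (forall i, (i < k)%nat -> f i < c) ->
  exists t, t < c /\ forall i, (i < k)%nat -> f i <= t.
Proof. induction k; intros.
  - exists (c - 1). split; [lra|]. intros; lia.
  - destruct IHk as [t [Ht1 Ht2]]. intros; apply H; lia.
    exists (Rmax t (f k)). split. { apply Rmax_lub_lt; [auto| apply H; lia]. }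
    intros i Hi. destruct (Nat.eq_dec i k). subst; apply Rmax_r.
    eapply Rle_trans; [apply Ht2; lia| apply Rmax_l]. Qed.

Lemma finite_argmax k (f : nat -> R) : (1 <= k)%nat -> exists i0, (i0 < k)%nat /\ forall i, (i < k)%nat -> f i <= f i0.
Proof. induction k; intros; [lia|]. destruct (Nat.eq_dec k 0).
  - subst. exists O. split; [lia|]. intros. replace i with O by lia. lra.
  - destruct IHk as [i0 [H1 H2]]; [lia|]. destruct (Rle_dec (f k) (f i0)).
    + exists i0; split; [lia|]. intros. destruct (Nat.eq_dec i k); [subst; auto|]. apply H2; lia.
    + exists k; split; [lia|]. intros. destruct (Nat.eq_dec i k); [subst; lra|].
      specialize (H2 i ltac:(lia)). lra. Qed.

Lemma sum1_pos_entry k v : vnonneg k v -> rsum k v = 1 -> exists l, (l < k)%nat /\ 0 < v l.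
Proof. intros. apply NNPP; intro Hn. assert (rsum k v <= rsum k (fun _ => 0)).
  { apply rsum_le. intros. apply Rnot_lt_le. intro. apply Hn. exists i; auto. }
  rewrite (rsum_zero k (fun _ => 0)) in H1 by auto. lra. Qed.

Lemma Scw_normalized k M t : (1 <= k)%nat -> Scw k M t -> exists y, vpos k y /\ rsum k y = 1 /\
   forall i, (i < k)%nat -> mulv k M y i <= t * y i.
Proof. intros Hk [z [Hz H]]. assert (Hs : 0 < rsum k z) by (apply (rsum_pos k z O); auto; try lia;
  intros; apply Rlt_le; auto).
  exists (fun l => / rsum k z * z l). split; [|split].
  - intros j Hj. apply Rmult_lt_0_compat; auto. apply Rinv_0_lt_compat; auto.
  - rewrite rsum_scal. field. lra.
  - intros i Hi. rewrite mulv_scal. specialize (H i Hi).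
    assert (0 < / rsum k z) by (apply Rinv_0_lt_compat; auto). nra. Qed.

Lemma cw_limit k M : (1 <= k)%nat -> mnonneg k M ->
  exists v, vnonneg k v /\ rsum k v = 1 /\ forall i, (i < k)%nat -> mulv k M v i <= cw k M * v i.
Proof.
  intros Hk HM. set (c := cw k M).
  assert (G : forall N : nat, {p : R * vec | Scw k M (fst p) /\ fst p < c + / INR (S N) /\
     vpos k (snd p) /\ rsum k (snd p) = 1 /\ forall i, (i < k)%nat -> mulv k M (snd p) i <= fst p * snd p i}).
  { intros N. apply constructive_indefinite_description.
    destruct (cw_approx k M (/ INR (S N)) Hk HM) as [t [Ht1 Ht2]].
    { apply Rinv_0_lt_compat, lt_0_INR; lia. }
    destruct (Scw_normalized k M t Hk Ht1) as [y [Hy1 [Hy2 Hy3]]].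
    exists (t, y). simpl. auto. }
  set (y := fun N => snd (proj1_sig (G N))). set (t := fun N => fst (proj1_sig (G N))).
  assert (Hy : forall N, vpos k (y N) /\ rsum k (y N) = 1 /\ forall i, (i < k)%nat -> mulv k M (y N) i <= t N * y N i).
  { intros N. unfold y, t. destruct (proj2_sig (G N)) as [_ [_ H]]. auto. }
  assert (Ht : forall N, c <= t N /\ t N < c + / INR (S N)).
  { intros N. unfold t. destruct (proj2_sig (G N)) as [H1 [H2 _]]. split; auto. apply cw_le; auto. }
  destruct (bwvec k y) as [phi [v [Hp Hv]]].
  { intros N j Hj. destruct (Hy N) as [H1 [H2 _]]. split. apply Rlt_le, H1; auto.
    rewrite <- H2. apply rsum_ge_term; auto. intros; apply Rlt_le, H1; auto. }
  assert (Htc : Un_cv (fun N => t (phi N)) c).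
  { intros e He. destruct (inv_succ_small e He) as [N0 HN0]. exists N0. intros N HN.
    unfold Rdist. destruct (Ht (phi N)). pose proof (incr_ge phi Hp N).
    specialize (HN0 (phi N) ltac:(lia)). rewrite Rabs_right; lra. }
  exists v. split; [|split].
  - intros j Hj. apply (cv_le (fun _ => 0) (fun N => y (phi N) j)); auto.
    intros; apply Rlt_le, (proj1 (Hy (phi n))); auto. apply cv_const.
  - apply (cv_unique (fun N => rsum k (y (phi N)))). apply rsum_cv. intros; apply Hv; auto.
    apply (cv_ext (fun _ => 1)). intros; symmetry; apply (proj1 (proj2 (Hy (phi n)))). apply cv_const.
  - intros i Hi. apply (cv_le (fun N => mulv k M (y (phi N)) i) (fun N => t (phi N) * y (phi N) i)).
    intros; apply (proj2 (proj2 (Hy (phi n)))); auto.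
    unfold mulv. apply rsum_cv. intros. apply cv_scal. apply Hv; auto.
    apply CV_mult; auto.
Qed.

Lemma PF_pos k M : (1 <= k)%nat -> mpos k M ->
  exists v, vpos k v /\ rsum k v = 1 /\ forall i, (i < k)%nat -> mulv k M v i = cw k M * v i.
Proof.
  intros Hk HM. assert (HMn : mnonneg k M) by (intros i l Hi Hl; apply Rlt_le, HM; auto).
  destruct (cw_limit k M Hk HMn) as [v [Hv1 [Hv2 Hv3]]]. set (c := cw k M) in *.
  destruct (sum1_pos_entry k v Hv1 Hv2) as [l0 [Hl0 Hvl0]].
  assert (HMv : forall i, (i < k)%nat -> 0 < mulv k M v i).
  { intros. unfold mulv. apply (rsum_pos k _ l0); auto.
    - intros; apply Rmult_le_pos; auto; apply HMn; auto.
    - apply Rmult_lt_0_compat; auto. }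
  assert (Hc : 0 <= c) by (apply cw_ge0; auto).
  assert (Heq : forall i, (i < k)%nat -> mulv k M v i = c * v i).
  { apply NNPP. intro Hn. apply not_all_ex_not in Hn. destruct Hn as [i0 Hi0].
    apply imply_to_and in Hi0. destruct Hi0 as [Hi0 Hne].
    assert (Hlt : mulv k M v i0 < c * v i0) by (specialize (Hv3 i0 Hi0); lra).
    set (w := mulv k M v).
    assert (Hw : forall i, (i < k)%nat -> mulv k M w i < c * w i).
    { intros i Hi. unfold w at 2. rewrite <- mulv_scal. unfold mulv at 1 2.
      apply (rsum_lt k _ _ i0); auto.
      - intros. apply Rmult_le_compat_l. apply HMn; auto. apply Hv3; auto.
      - apply Rmult_lt_compat_l. apply HM; auto. auto. }
    destruct (finite_strict k (fun i => mulv k M w i / w i) c) as [t [Ht1 Ht2]].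
    { intros i Hi. specialize (Hw i Hi). specialize (HMv i Hi). unfold w in *.
      apply (Rmult_lt_reg_r (mulv k M v i)); auto. unfold Rdiv. rewrite Rmult_assoc, Rinv_l by lra. lra. }
    assert (Scw k M t).
    { exists w. split. intros j Hj; apply HMv; auto. intros i Hi. specialize (Ht2 i Hi).
      specialize (HMv i Hi). unfold w in *.
      apply (Rmult_le_compat_r (mulv k M v i)) in Ht2; [|lra]. unfold Rdiv in Ht2.
      rewrite Rmult_assoc, Rinv_l in Ht2 by lra. lra. }
    pose proof (cw_le k M t Hk HMn H). unfold c in Ht1. lra. }
  exists v. split; [|split]; auto.
  intros j Hj. specialize (HMv j Hj). rewrite Heq in HMv by auto. specialize (Hv1 j Hj).
  destruct (Rle_lt_or_eq_dec 0 (v j) Hv1); auto. rewrite <- e in HMv. lra.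
Qed.

Definition pert (M : mat) (e : R) : mat := fun i l => M i l + e.

Lemma mulv_pert k M e x i : mulv k (pert M e) x i = mulv k M x i + e * rsum k x.
Proof. unfold mulv, pert. rewrite <- rsum_scal, <- rsum_plus. apply rsum_ext; intros; ring. Qed.

Lemma cw_pert_upper k M t e : (1 <= k)%nat -> mnonneg k M -> 0 <= e -> Scw k M t ->
  exists D, 0 <= D /\ Scw k (pert M e) (t + e * D) /\ forall e', 0 <= e' -> Scw k (pert M e') (t + e' * D).
Proof. intros Hk HM He [z [Hz H]].
  set (D := rsum k (fun i => rsum k z / z i)).
  assert (Hsz : 0 < rsum k z) by (apply (rsum_pos k z O); auto; try lia; intros; apply Rlt_le; auto).
  assert (HD : forall i, (i < k)%nat -> rsum k z <= D * z i).
  { intros i Hi. assert (rsum k z / z i <= D).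
    { apply (rsum_ge_term k (fun i => rsum k z / z i)); auto. intros. apply Rlt_le.
      apply Rdiv_lt_0_compat; auto. }
    specialize (Hz i Hi). apply (Rmult_le_compat_r (z i)) in H0; [|lra].
    unfold Rdiv in H0. rewrite Rmult_assoc, Rinv_l in H0 by lra. lra. }
  assert (HD0 : 0 <= D). { specialize (HD O ltac:(lia)). specialize (Hz O ltac:(lia)). nra. }
  assert (Hgen : forall e', 0 <= e' -> Scw k (pert M e') (t + e' * D)).
  { intros e' He'. exists z. split; auto. intros i Hi. rewrite mulv_pert. specialize (H i Hi).
    specialize (HD i Hi). nra. }
  exists D. split; auto.
Qed.

Lemma PF_gen k M : (1 <= k)%nat -> mnonneg k M ->
  exists v (zs : nat -> vec) (ts : nat -> R),
    vnonneg k v /\ rsum k v = 1 /\ (forall i, (i < k)%nat -> mulv k M v i = cw k M * v i) /\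
    (forall N, vpos k (zs N)) /\ (forall N i, (i < k)%nat -> mulv k M (zs N) i <= ts N * zs N i) /\
    Un_cv ts (cw k M) /\ (forall j, (j < k)%nat -> Un_cv (fun N => zs N j) (v j)).
Proof.
  intros Hk HM. set (c := cw k M).
  assert (Hep : forall N, 0 < / INR (S N)) by (intros; apply Rinv_0_lt_compat, lt_0_INR; lia).
  assert (Hpos : forall N, mpos k (pert M (/ INR (S N)))).
  { intros N i l Hi Hl. unfold pert. specialize (HM i l Hi Hl). specialize (Hep N). lra. }
  assert (HMn : forall N, mnonneg k (pert M (/ INR (S N)))).
  { intros N i l Hi Hl. apply Rlt_le, Hpos; auto. }
  assert (G : forall N : nat, {v : vec | vpos k v /\ rsum k v = 1 /\
     forall i, (i < k)%nat -> mulv k (pert M (/ INR (S N))) v i = cw k (pert M (/ INR (S N))) * v i}).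
  { intros N. apply constructive_indefinite_description. apply PF_pos; auto. }
  set (y := fun N => proj1_sig (G N)). set (cN := fun N => cw k (pert M (/ INR (S N)))).
  assert (Hy : forall N, vpos k (y N) /\ rsum k (y N) = 1 /\
     forall i, (i < k)%nat -> mulv k M (y N) i = cN N * y N i - / INR (S N)).
  { intros N. unfold y, cN. destruct (proj2_sig (G N)) as [H1 [H2 H3]]. split; [|split]; auto.
    intros i Hi. rewrite <- H3 by auto. rewrite mulv_pert, H2. ring. }
  assert (Hc1 : forall N, c <= cN N).
  { intros N. apply cw_le; auto. exists (y N). destruct (Hy N) as [H1 [H2 H3]]. split; auto.
    intros i Hi. rewrite H3 by auto. specialize (Hep N). lra. }
  assert (Hcv : Un_cv cN c).
  { intros e He. destruct (cw_approx k M (e/2) Hk HM) as [t [Ht1 Ht2]]. lra.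
    destruct (cw_pert_upper k M t 0 Hk HM (Rle_refl 0) Ht1) as [D [HD0 [_ HD]]].
    destruct (inv_succ_small (e / 2 / (D + 1))) as [N0 HN0].
    { apply Rdiv_lt_0_compat; lra. }
    exists N0. intros N HN. unfold Rdist. specialize (Hc1 N).
    assert (cN N <= t + / INR (S N) * D) by (apply cw_le; auto; apply HD; apply Rlt_le; auto).
    specialize (HN0 N HN). specialize (Hep N).
    assert (/ INR (S N) * D <= e / 2).
    { apply (Rmult_lt_compat_r (D+1)) in HN0; [|lra]. unfold Rdiv in HN0.
      rewrite Rmult_assoc, Rinv_l in HN0 by lra. rewrite Rmult_plus_distr_l in HN0. lra. }
    fold c in Ht2. rewrite Rabs_right; lra. }
  destruct (bwvec k y) as [phi [v [Hp Hv]]].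
  { intros N j Hj. destruct (Hy N) as [H1 [H2 _]]. split. apply Rlt_le, H1; auto.
    rewrite <- H2. apply rsum_ge_term; auto. intros; apply Rlt_le, H1; auto. }
  exists v, (fun N => y (phi N)), (fun N => cN (phi N)). split; [|split; [|split; [|split; [|split]]]].
  - intros j Hj. apply (cv_le (fun _ => 0) (fun N => y (phi N) j)); auto.
    intros; apply Rlt_le, (proj1 (Hy (phi n))); auto. apply cv_const.
  - apply (cv_unique (fun N => rsum k (y (phi N)))). apply rsum_cv. intros; apply Hv; auto.
    apply (cv_ext (fun _ => 1)). intros; symmetry; apply (proj1 (proj2 (Hy (phi n)))). apply cv_const.
  - intros i Hi. apply (cv_unique (fun N => mulv k M (y (phi N)) i)).
    unfold mulv. apply rsum_cv. intros. apply cv_scal. apply Hv; auto.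
    apply (cv_ext (fun N => cN (phi N) * y (phi N) i - / INR (S (phi N)))).
    intros; symmetry; apply (proj2 (proj2 (Hy (phi n)))); auto.
    replace (c * v i) with (c * v i - 0) by ring. apply CV_minus. apply CV_mult; auto.
    apply cv_subseq; auto. apply (cv_subseq (fun N => / INR (S N))); auto. apply cv_inv_succ.
  - intros N; apply (proj1 (Hy (phi N))).
  - intros N i Hi. rewrite (proj2 (proj2 (Hy (phi N)))) by auto. specialize (Hep (phi N)). lra.
  - split; [apply cv_subseq; auto| auto].
Qed.

Definition nm (x y : R) := sqrt (x * x + y * y).

Lemma nm_ge0 x y : 0 <= nm x y.
Proof. apply sqrt_pos. Qed.

Lemma nm_sq x y : nm x y * nm x y = x * x + y * y.
Proof. unfold nm. apply sqrt_sqrt. nra. Qed.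

Lemma nm_triangle x1 y1 x2 y2 : nm (x1 + x2) (y1 + y2) <= nm x1 y1 + nm x2 y2.
Proof.
  pose proof (nm_ge0 x1 y1). pose proof (nm_ge0 x2 y2). pose proof (nm_sq x1 y1). pose proof (nm_sq x2 y2).
  assert (x1 * x2 + y1 * y2 <= nm x1 y1 * nm x2 y2).
  { destruct (Rle_dec (x1 * x2 + y1 * y2) 0). nra.
    assert ((x1 * x2 + y1 * y2) * (x1 * x2 + y1 * y2) <= (nm x1 y1 * nm x2 y2) * (nm x1 y1 * nm x2 y2)).
    { replace ((nm x1 y1 * nm x2 y2) * (nm x1 y1 * nm x2 y2)) with ((nm x1 y1 * nm x1 y1) * (nm x2 y2 * nm x2 y2)) by ring.
      rewrite H1, H2.
      replace ((x1*x1+y1*y1)*(x2*x2+y2*y2)) with ((x1*x2+y1*y2)*(x1*x2+y1*y2) + (x1*y2-x2*y1)*(x1*y2-x2*y1)) by ring.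
      pose proof (Rle_0_sqr (x1*y2-x2*y1)). unfold Rsqr in *. lra. }
    apply Rsqr_incr_0_var. unfold Rsqr; auto. apply Rmult_le_pos; auto. }
  unfold nm at 1. rewrite <- (sqrt_square (nm x1 y1 + nm x2 y2)) by lra.
  apply sqrt_le_1_alt. nra.
Qed.

Lemma nm_scal c x y : 0 <= c -> nm (c * x) (c * y) = c * nm x y.
Proof. intros. unfold nm. replace (c * x * (c * x) + c * y * (c * y)) with ((c * c) * (x * x + y * y)) by ring.
  rewrite sqrt_mult by nra. rewrite sqrt_square; auto. Qed.

Lemma nm_mult a b x y : nm (a * x - b * y) (a * y + b * x) = nm a b * nm x y.
Proof. unfold nm. rewrite <- sqrt_mult by nra. f_equal. ring. Qed.

Lemma nm_pos x y : (x, y) <> (0, 0) -> 0 < nm x y.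
Proof. intros. destruct (Rle_lt_or_eq_dec 0 (nm x y) (nm_ge0 x y)); auto.
  exfalso. pose proof (nm_sq x y). rewrite <- e in H0. apply H. f_equal; nra. Qed.

Lemma nm_rsum k f g : nm (rsum k f) (rsum k g) <= rsum k (fun l => nm (f l) (g l)).
Proof. induction k; simpl. unfold nm. replace (0*0+0*0) with 0 by ring. rewrite sqrt_0; lra.
  eapply Rle_trans. apply nm_triangle. lra. Qed.

Lemma eig_bound k C a b t x : (1 <= k)%nat -> mnonneg k C -> is_eigenvalue k C a b ->
  vpos k x -> (forall i, (i < k)%nat -> mulv k C x i <= t * x i) -> nm a b <= t.
Proof.
  intros Hk HC [z [[j [Hj Hzj]] Hz]] Hx Ht.
  destruct (finite_argmax k (fun i => nm (fst (z i)) (snd (z i)) / x i) Hk) as [i0 [Hi0 Hmax]].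
  set (s := nm (fst (z i0)) (snd (z i0)) / x i0) in *.
  assert (Hzl : forall l, (l < k)%nat -> nm (fst (z l)) (snd (z l)) <= s * x l).
  { intros l Hl. specialize (Hmax l Hl). specialize (Hx l Hl). apply (Rmult_le_compat_r (x l)) in Hmax; [|lra].
    unfold Rdiv in Hmax. rewrite Rmult_assoc, Rinv_l in Hmax by lra. lra. }
  assert (Hs : 0 < s).
  { specialize (Hmax j Hj). assert (0 < nm (fst (z j)) (snd (z j)) / x j).
    apply Rdiv_lt_0_compat. apply nm_pos. destruct (z j); auto. apply Hx; auto. lra. }
  assert (Hz0 : nm (fst (z i0)) (snd (z i0)) = s * x i0).
  { unfold s. field. specialize (Hx i0 Hi0). lra. }
  destruct (Hz i0 Hi0) as [H1 H2].
  assert (nm a b * nm (fst (z i0)) (snd (z i0)) <= s * (t * x i0)).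
  { rewrite <- nm_mult. rewrite <- H1, <- H2. eapply Rle_trans. apply nm_rsum.
    apply Rle_trans with (rsum k (fun l => C i0 l * (s * x l))).
    - apply rsum_le. intros l Hl. rewrite nm_scal by (apply HC; auto).
      apply Rmult_le_compat_l. apply HC; auto. apply Hzl; auto.
    - apply Rle_trans with (s * mulv k C x i0). right. unfold mulv. rewrite <- rsum_scal.
      apply rsum_ext; intros; ring. apply Rmult_le_compat_l; [lra|]. apply Ht; auto. }
  rewrite Hz0 in H. specialize (Hx i0 Hi0).
  assert (0 < s * x i0) by (apply Rmult_lt_0_compat; auto).
  apply (Rmult_le_reg_r (s * x i0)); auto. lra.
Qed.

Lemma spectral_radius_char k C c : (1 <= k)%nat -> mnonneg k C -> 0 <= c ->
  (exists v, vnonneg k v /\ vnonzero k v /\ forall i, (i < k)%nat -> mulv k C v i = c * v i) ->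
  (forall t, t > c -> exists x, vpos k x /\ forall i, (i < k)%nat -> mulv k C x i <= t * x i) ->
  spectral_radius k C = c.
Proof.
  intros Hk HC Hc [v [Hv1 [Hv2 Hv3]]] Hup.
  assert (Hsr : is_spectral_radius k C c).
  { split.
    - exists c, 0. split.
      + exists (fun l => (v l, 0)). split.
        * destruct Hv2 as [j [Hj Hvj]]. exists j. split; auto. intro Heq. inversion Heq. auto.
        * intros i Hi. simpl. split.
          -- rewrite <- Hv3 by auto. unfold mulv. ring.
          -- rewrite rsum_zero. ring. intros; ring.
      + replace (c * c + 0 * 0) with (c * c) by ring. rewrite sqrt_square; auto.
    - intros a b Hab. apply Rnot_lt_le. intro Hlt.
      set (t := (c + sqrt (a * a + b * b)) / 2).
      destruct (Hup t) as [x [Hx Hxt]]. unfold t; lra.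
      pose proof (eig_bound k C a b t x Hk HC Hab Hx Hxt). unfold nm in H. unfold t in H. lra. }
  unfold spectral_radius.
  assert (Hex : is_spectral_radius k C (epsilon (inhabits 0) (is_spectral_radius k C))).
  { apply epsilon_spec. exists c; auto. }
  destruct Hex as [[a [b [Hab Heq]]] Hb]. destruct Hsr as [[a' [b' [Hab' Heq']]] Hb'].
  specialize (Hb _ _ Hab'). specialize (Hb' _ _ Hab). rewrite <- Heq in Hb'. rewrite <- Heq' in Hb. lra.
Qed.

Lemma reindex (m n : nat) (kap : nat -> nat) (g : nat -> R) :
  (forall i, (i < m)%nat -> (kap i < n)%nat) ->
  (forall i i', (i < m)%nat -> (i' < m)%nat -> kap i = kap i' -> i = i') ->
  (forall j, (j < n)%nat -> (forall i, (i < m)%nat -> kap i <> j) -> g j = 0) ->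
  rsum n g = rsum m (fun i => g (kap i)).
Proof.
  intros H1 H2 H3.
  set (ind := fun i j => if Nat.eq_dec (kap i) j then 1 else 0).
  transitivity (rsum n (fun j => rsum m (fun i => ind i j * g j))).
  - apply rsum_ext. intros j Hj.
    destruct (classic (exists i, (i < m)%nat /\ kap i = j)) as [[i0 [Hi0 He]]|Hn].
    + rewrite (rsum_single m _ i0); auto. unfold ind. destruct (Nat.eq_dec (kap i0) j); [ring|congruence].
      intros i Hi Hne. unfold ind. destruct (Nat.eq_dec (kap i) j); [|ring].
      exfalso. apply Hne. apply H2; congruence.
    + rewrite H3; auto. rewrite rsum_zero; auto. intros; ring.
      intros i Hi He. apply Hn; eauto.
  - rewrite rsum_swap. apply rsum_ext. intros i Hi.
    rewrite (rsum_single n _ (kap i)); auto. unfold ind. destruct (Nat.eq_dec (kap i) (kap i)); [ring|congruence].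
    intros j Hj Hne. unfold ind. destruct (Nat.eq_dec (kap i) j); [congruence|ring].
Qed.

Definition sgm (m : nat) (B : mat) (j : nat) : nat :=
  epsilon (inhabits O) (fun i => (i < m)%nat /\ 0 < B i j).
Definition bb (m : nat) (B : mat) (j : nat) : R := B (sgm m B j) j.

Definition Bprops (m n : nat) (B : mat) : Prop :=
  (forall i j, (i < m)%nat -> (j < n)%nat -> 0 <= B i j) /\
  (forall i, (i < m)%nat -> exists j, (j < n)%nat /\ B i j <> 0) /\
  (forall j, (j < n)%nat -> exactly_one_pos_col m B j).

Lemma sgm_spec m n B j : Bprops m n B -> (j < n)%nat ->
  (sgm m B j < m)%nat /\ 0 < bb m B j /\ (forall i, (i < m)%nat -> i <> sgm m B j -> B i j = 0).
Proof.
  intros [HB [_ Hcol]] Hj. destruct (Hcol j Hj) as [i0 [Hi0 [Hp Hu]]].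
  assert (Hs : (sgm m B j < m)%nat /\ 0 < B (sgm m B j) j).
  { unfold sgm. apply epsilon_spec. exists i0; auto. }
  unfold bb. split; [tauto|split;[tauto|]].
  intros i Hi Hne. destruct (HB i j Hi Hj) as [Hlt|Heq]; auto.
  exfalso. apply Hne. rewrite (Hu i Hi Hlt). symmetry; apply Hu; tauto.
Qed.

Lemma sgm_pos m n B i j : Bprops m n B -> (i < m)%nat -> (j < n)%nat -> 0 < B i j -> sgm m B j = i.
Proof. intros HB Hi Hj Hp. destruct (sgm_spec m n B j HB Hj) as [H1 [H2 H3]].
  destruct (Nat.eq_dec i (sgm m B j)); auto. rewrite H3 in Hp; auto. lra. Qed.

Lemma B_single m n B (w : nat -> R) j : Bprops m n B -> (j < n)%nat ->
  rsum m (fun i => w i * B i j) = w (sgm m B j) * bb m B j.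
Proof. intros HB Hj. destruct (sgm_spec m n B j HB Hj) as [H1 [H2 H3]].
  rewrite (rsum_single m _ (sgm m B j)); auto. intros. rewrite H3; auto; ring. Qed.

Definition valid (m n : nat) (B : mat) (kap : nat -> nat) : Prop :=
  forall i, (i < m)%nat -> (kap i < n)%nat /\ sgm m B (kap i) = i.

Lemma valid_inj m n B kap i i' : valid m n B kap -> (i < m)%nat -> (i' < m)%nat -> kap i = kap i' -> i = i'.
Proof. intros H Hi Hi' He. destruct (H i Hi), (H i' Hi'). congruence. Qed.

Definition Mk (m : nat) (A B : mat) (kap : nat -> nat) : mat :=
  fun i' i => A i' (kap i) / bb m B (kap i).

Definition inimg (m : nat) (B : mat) (kap : nat -> nat) (j : nat) : bool :=
  Nat.eqb (kap (sgm m B j)) j.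

Definition Emb (m : nat) (B : mat) (kap : nat -> nat) (z : vec) : vec :=
  fun j => if inimg m B kap j then z (sgm m B j) / bb m B j else 0.

Lemma inimg_true m n B kap j : Bprops m n B -> valid m n B kap -> (j < n)%nat ->
  inimg m B kap j = true <-> exists i, (i < m)%nat /\ kap i = j.
Proof. intros HB Hv Hj. unfold inimg. rewrite Nat.eqb_eq. split.
  - intros. exists (sgm m B j). split; auto. apply (sgm_spec m n B j HB Hj).
  - intros [i [Hi He]]. subst. destruct (Hv i Hi). congruence. Qed.

Lemma inimg_kap m n B kap i : Bprops m n B -> valid m n B kap -> (i < m)%nat -> inimg m B kap (kap i) = true.
Proof. intros. destruct (H0 i H1). apply (inimg_true m n B kap); eauto. Qed.

Lemma Emb_kap m n B kap z i : Bprops m n B -> valid m n B kap -> (i < m)%nat ->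
  Emb m B kap z (kap i) = z i / bb m B (kap i).
Proof. intros. unfold Emb. rewrite (inimg_kap m n); auto. destruct (H0 i H1). rewrite H3; auto. Qed.

Lemma sum_on_img m n B kap (g : nat -> R) : Bprops m n B -> valid m n B kap ->
  (forall j, (j < n)%nat -> inimg m B kap j = false -> g j = 0) ->
  rsum n g = rsum m (fun i => g (kap i)).
Proof. intros HB Hv Hg. apply reindex. intros; apply Hv; auto. intros; eapply valid_inj; eauto.
  intros j Hj Hn. apply Hg; auto. destruct (inimg m B kap j) eqn:E; auto.
  exfalso.
  apply (inimg_true m n B kap j HB Hv Hj) in E. destruct E as [i [Hi He]]. eapply Hn; eauto. Qed.

Lemma B_Emb m n B kap z i : Bprops m n B -> valid m n B kap -> (i < m)%nat ->
  mulv n B (Emb m B kap z) i = z i.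
Proof. intros HB Hv Hi. unfold mulv. rewrite (sum_on_img m n B kap); auto.
  - rewrite (rsum_single m _ i); auto.
    + rewrite (Emb_kap m n); auto. destruct (Hv i Hi). destruct (sgm_spec m n B (kap i) HB H) as [_ [Hb _]].
      unfold bb in *. rewrite H0 in *. field. lra.
    + intros i' Hi' Hne. destruct (Hv i' Hi'). destruct (sgm_spec m n B (kap i') HB H) as [_ [_ H3]].
      rewrite H3; [ring|auto|congruence].
  - intros j Hj Hf. unfold Emb. rewrite Hf. ring. Qed.

Lemma A_Emb m n A B kap z i : Bprops m n B -> valid m n B kap ->
  mulv n A (Emb m B kap z) i = mulv m (Mk m A B kap) z i.
Proof. intros HB Hv. unfold mulv. rewrite (sum_on_img m n B kap); auto.
  - apply rsum_ext. intros i' Hi'. rewrite (Emb_kap m n); auto. unfold Mk. unfold Rdiv. ring.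
  - intros j Hj Hf. unfold Emb. rewrite Hf. ring. Qed.

Lemma Emb_nonneg m n B kap z : Bprops m n B -> valid m n B kap -> vnonneg m z -> vnonneg n (Emb m B kap z).
Proof. intros HB Hv Hz j Hj. unfold Emb. destruct (inimg m B kap j) eqn:E; [|lra].
  destruct (sgm_spec m n B j HB Hj) as [H1 [H2 _]]. unfold Rdiv; apply Rmult_le_pos; [apply Hz; auto| apply Rlt_le, Rinv_0_lt_compat; auto]. Qed.

Lemma Rbar_le_trans a b c : Rbar_le a b -> Rbar_le b c -> Rbar_le a c.
Proof. destruct a, b, c; simpl; intros; auto; try lra; contradiction. Qed.

Lemma Rbar_max_l a b : Rbar_le a (Rbar_max a b).
Proof. destruct a, b; simpl; auto. apply Rmax_l. Qed.
Lemma Rbar_max_r a b : Rbar_le b (Rbar_max a b).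
Proof. destruct a, b; simpl; auto. apply Rmax_r. Qed.

Lemma maxn_le k g t : 0 <= t -> (forall i, (i < k)%nat -> Rbar_le (g i) (Fin t)) -> Rbar_le (Rbar_maxn k g) (Fin t).
Proof. induction k; simpl; intros; auto.
  assert (H1 : Rbar_le (Rbar_maxn k g) (Fin t)) by (apply IHk; auto).
  assert (H2 : Rbar_le (g k) (Fin t)) by (apply H0; lia).
  destruct (Rbar_maxn k g), (g k); simpl in *; auto. apply Rmax_lub; auto. Qed.

Lemma maxn_le_inv k g t i : (i < k)%nat -> Rbar_le (Rbar_maxn k g) (Fin t) -> Rbar_le (g i) (Fin t).
Proof. induction k; simpl; intros; [lia|]. destruct (Nat.eq_dec i k).
  - subst. eapply Rbar_le_trans; [apply Rbar_max_r|eauto].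
  - apply IHk; [lia|]. eapply Rbar_le_trans; [apply Rbar_max_l|eauto]. Qed.

Lemma maxn_ge k g a i : (i < k)%nat -> Rbar_le a (g i) -> Rbar_le a (Rbar_maxn k g).
Proof. induction k; simpl; intros; [lia|]. destruct (Nat.eq_dec i k).
  - subst. eapply Rbar_le_trans; [eauto|apply Rbar_max_r].
  - eapply Rbar_le_trans; [apply IHk; eauto; lia|apply Rbar_max_l]. Qed.

Lemma maxn_fin k g : (forall i, (i < k)%nat -> exists r, g i = Fin r) -> exists r, Rbar_maxn k g = Fin r.
Proof. induction k; simpl; intros. exists 0; auto.
  destruct IHk as [r1 H1]. intros; apply H; lia. destruct (H k) as [r2 H2]. lia.
  rewrite H1, H2. simpl. eauto. Qed.

Lemma quot_fin a b : 0 < b -> quot a b = Fin (a / b).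
Proof. intros. unfold quot. destruct (Req_dec_T b 0); auto. lra. Qed.

Lemma quot_le_inv a b t : 0 <= a -> 0 <= b -> Rbar_le (quot a b) (Fin t) -> a <= t * b.
Proof. intros Ha Hb H. unfold quot in H. destruct (Req_dec_T b 0).
  - destruct (Req_dec_T a 0); simpl in H; [subst; lra| contradiction].
  - simpl in H. assert (0 < b) by lra. apply (Rmult_le_compat_r b) in H; [|lra].
    unfold Rdiv in H. rewrite Rmult_assoc, Rinv_l in H by lra. lra. Qed.

Lemma Bpos m n B x : Bprops m n B -> vpos n x -> forall i, (i < m)%nat -> 0 < mulv n B x i.
Proof. intros [HB [Hr Hc]] Hx i Hi. destruct (Hr i Hi) as [j [Hj Hne]]. unfold mulv.
  apply (rsum_pos n _ j); auto. intros; apply Rmult_le_pos; auto. apply Rlt_le, Hx; auto.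
  apply Rmult_lt_0_compat; auto. destruct (HB i j Hi Hj); auto. congruence. Qed.

Lemma rAB_le_of m n A B x t : (forall i, (i < m)%nat -> 0 < mulv n B x i) -> 0 <= t ->
  (forall i, (i < m)%nat -> mulv n A x i <= t * mulv n B x i) -> Rbar_le (rAB m n A B x) (Fin t).
Proof. intros HB Ht H. unfold rAB. apply maxn_le; auto. intros i Hi. rewrite quot_fin by auto.
  simpl. specialize (H i Hi). specialize (HB i Hi). apply (Rmult_le_reg_r (mulv n B x i)); auto.
  unfold Rdiv. rewrite Rmult_assoc, Rinv_l by lra. lra. Qed.

Lemma rAB_ge_of m n A B x c i : (i < m)%nat -> 0 < mulv n B x i -> c * mulv n B x i <= mulv n A x i ->
  Rbar_le (Fin c) (rAB m n A B x).
Proof. intros Hi HB H. unfold rAB. apply (maxn_ge _ _ _ i); auto. rewrite quot_fin by auto. simpl.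
  apply (Rmult_le_reg_r (mulv n B x i)); auto. unfold Rdiv. rewrite Rmult_assoc, Rinv_l by lra. lra. Qed.

Lemma rAB_le_inv m n A B x t : (forall i, (i < m)%nat -> 0 <= mulv n A x i /\ 0 <= mulv n B x i) ->
  Rbar_le (rAB m n A B x) (Fin t) -> forall i, (i < m)%nat -> mulv n A x i <= t * mulv n B x i.
Proof. intros H1 H2 i Hi. apply quot_le_inv; try apply H1; auto.
  apply (maxn_le_inv m (fun i => quot (mulv n A x i) (mulv n B x i)) t i Hi H2). Qed.

Lemma rAB_fin m n A B x : (forall i, (i < m)%nat -> 0 < mulv n B x i) -> exists r, rAB m n A B x = Fin r.
Proof. intros. unfold rAB. apply maxn_fin. intros. rewrite quot_fin; eauto. Qed.

Lemma rho_char m n A B c :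
  (forall x, vpos n x -> Rbar_le (Fin c) (rAB m n A B x)) ->
  (forall e, e > 0 -> exists x, vpos n x /\ Rbar_le (rAB m n A B x) (Fin (c + e))) ->
  rhoAB m n A B = Fin c.
Proof.
  intros Hlb Hap.
  assert (Hg : is_glb_Rbar (fun v => exists x, vpos n x /\ v = rAB m n A B x) (Fin c)).
  { split.
    - intros v [x [Hx ->]]. auto.
    - intros l' Hl'. destruct l' as [a|].
      + simpl. apply Rnot_lt_le. intro Hlt. destruct (Hap ((a - c) / 2)) as [x [Hx Hr]]. lra.
        specialize (Hl' _ (ex_intro _ x (conj Hx eq_refl))). pose proof (Rbar_le_trans _ _ _ Hl' Hr).
        simpl in H. lra.
      + destruct (Hap 1) as [x [Hx Hr]]. lra.
        specialize (Hl' _ (ex_intro _ x (conj Hx eq_refl))). pose proof (Rbar_le_trans _ _ _ Hl' Hr).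
        simpl in H. auto. }
  unfold rhoAB. assert (He : is_glb_Rbar (fun v => exists x, vpos n x /\ v = rAB m n A B x)
     (epsilon (inhabits PInf) (is_glb_Rbar (fun v => exists x, vpos n x /\ v = rAB m n A B x)))).
  { apply epsilon_spec. eauto. }
  set (l := epsilon _ _) in *. destruct He as [He1 He2]. destruct Hg as [Hg1 Hg2].
  pose proof (He2 _ Hg1). pose proof (Hg2 _ He1). destruct l; simpl in *; [f_equal; lra| contradiction].
Qed.

Lemma emb_approx m n A B kap z t e : Bprops m n B ->
  (forall i j, (i < m)%nat -> (j < n)%nat -> 0 <= A i j) -> valid m n B kap ->
  vpos m z -> 0 <= t -> (forall i, (i < m)%nat -> mulv m (Mk m A B kap) z i <= t * z i) -> e > 0 ->
  exists x, vpos n x /\ (forall i, (i < m)%nat -> mulv n A x i <= (t + e) * mulv n B x i) /\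
    (forall j, (j < n)%nat -> Rabs (x j - Emb m B kap z j) <= e).
Proof.
  intros HB HA Hv Hz Ht Hmk He.
  set (S := rsum m (fun i => rsum n (fun j => A i j) / z i)).
  assert (HS : forall i, (i < m)%nat -> rsum n (fun j => A i j) <= S * z i).
  { intros i Hi. assert (rsum n (fun j => A i j) / z i <= S).
    { apply (rsum_ge_term m (fun i => rsum n (fun j => A i j) / z i)); auto. intros i' Hi'.
      unfold Rdiv; apply Rmult_le_pos. apply rsum_nonneg; intros; apply HA; auto.
      apply Rlt_le, Rinv_0_lt_compat, Hz; auto. }
    specialize (Hz i Hi). apply (Rmult_le_compat_r (z i)) in H; [|lra].
    unfold Rdiv in H. rewrite Rmult_assoc, Rinv_l in H by lra. lra. }
  assert (HS0 : 0 <= S). { apply rsum_nonneg. intros i' Hi'.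
      unfold Rdiv; apply Rmult_le_pos. apply rsum_nonneg; intros; apply HA; auto.
      apply Rlt_le, Rinv_0_lt_compat, Hz; auto. }
  set (d := e / (1 + S)).
  assert (Hd : 0 < d) by (apply Rdiv_lt_0_compat; lra).
  assert (Hd2 : d * S <= e). { unfold d. apply (Rmult_le_reg_r (1 + S)); [lra|].
    replace (e / (1 + S) * S * (1 + S)) with (e * S) by (field; lra). nra. }
  assert (Hd3 : d <= e). { unfold d. apply (Rmult_le_reg_r (1 + S)); [lra|].
    replace (e / (1 + S) * (1 + S)) with e by (field; lra). nra. }
  pose proof (Emb_nonneg m n B kap z HB Hv (fun j Hj => Rlt_le _ _ (Hz j Hj))) as HE.
  exists (fun j => Emb m B kap z j + d). split; [|split].
  - intros j Hj. specialize (HE j Hj). lra.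
  - intros i Hi.
    assert (EA : mulv n A (fun j => Emb m B kap z j + d) i = mulv m (Mk m A B kap) z i + d * rsum n (fun j => A i j)).
    { unfold mulv at 1. transitivity (rsum n (fun j => A i j * Emb m B kap z j + d * A i j)).
      apply rsum_ext; intros; ring. rewrite rsum_plus, rsum_scal.
      change (rsum n (fun j => A i j * Emb m B kap z j)) with (mulv n A (Emb m B kap z) i).
      rewrite (A_Emb m n A B kap z i HB Hv). auto. }
    assert (EB : mulv n B (fun j => Emb m B kap z j + d) i = z i + d * rsum n (fun j => B i j)).
    { unfold mulv at 1. transitivity (rsum n (fun j => B i j * Emb m B kap z j + d * B i j)).
      apply rsum_ext; intros; ring. rewrite rsum_plus, rsum_scal.
      change (rsum n (fun j => B i j * Emb m B kap z j)) with (mulv n B (Emb m B kap z) i).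
      rewrite (B_Emb m n B kap z i HB Hv Hi). auto. }
    rewrite EA, EB. assert (0 <= rsum n (fun j => B i j)).
    { apply rsum_nonneg. intros; apply (proj1 HB); auto. }
    specialize (Hmk i Hi). specialize (HS i Hi). specialize (Hz i Hi).
    assert (d * rsum n (fun j => A i j) <= e * z i).
    { apply Rle_trans with (d * (S * z i)). apply Rmult_le_compat_l; lra.
      rewrite <- Rmult_assoc. apply Rmult_le_compat_r; lra. }
    assert (0 <= (t + e) * (d * rsum n (fun j => B i j))) by (apply Rmult_le_pos; [lra|apply Rmult_le_pos; lra]).
    nra.
  - intros j Hj. replace (Emb m B kap z j + d - Emb m B kap z j) with d by ring. rewrite Rabs_right; lra.
Qed.

Lemma cw_mono k M M' : (1 <= k)%nat -> mnonneg k M ->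
  (forall i l, (i < k)%nat -> (l < k)%nat -> M i l <= M' i l) -> cw k M <= cw k M'.
Proof. intros Hk HM HMM'. assert (HM' : mnonneg k M').
  { intros i l Hi Hl. eapply Rle_trans; [apply HM|apply HMM']; auto. }
  apply (proj2 (cw_glb k M' Hk HM')). intros t [z [Hz Ht]]. apply cw_le; auto.
  exists z. split; auto. intros i Hi. eapply Rle_trans; [|apply Ht; auto].
  unfold mulv. apply rsum_le. intros. apply Rmult_le_compat_r. apply Rlt_le, Hz; auto. apply HMM'; auto. Qed.

Lemma Mk_nonneg m n A B kap : Bprops m n B -> (forall i j, (i < m)%nat -> (j < n)%nat -> 0 <= A i j) ->
  valid m n B kap -> mnonneg m (Mk m A B kap).
Proof. intros HB HA Hv i l Hi Hl. unfold Mk. destruct (Hv l Hl).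
  destruct (sgm_spec m n B (kap l) HB H) as [_ [Hb _]]. unfold Rdiv. apply Rmult_le_pos; auto.
  apply Rlt_le, Rinv_0_lt_compat; auto. Qed.

Lemma Mk_pos m n A B kap : Bprops m n B -> (forall i j, (i < m)%nat -> (j < n)%nat -> 0 < A i j) ->
  valid m n B kap -> mpos m (Mk m A B kap).
Proof. intros HB HA Hv i l Hi Hl. unfold Mk. destruct (Hv l Hl).
  destruct (sgm_spec m n B (kap l) HB H) as [_ [Hb _]]. apply Rdiv_lt_0_compat; auto. Qed.

Fixpoint enum (c : nat -> list nat) (i0 k : nat) : list (list nat) :=
  match k with
  | O => nil :: nil
  | S k' => flat_map (fun j => map (cons j) (enum c (S i0) k')) (c i0)
  end.

Lemma enum_sound c k : forall i0 l, In l (enum c i0 k) ->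
  length l = k /\ forall i, (i < k)%nat -> In (nth i l O) (c (i0 + i)%nat).
Proof. induction k; simpl; intros i0 l H.
  - destruct H as [<-|[]]. split; auto. intros; lia.
  - apply in_flat_map in H. destruct H as [j [Hj Hl]]. apply in_map_iff in Hl. destruct Hl as [l' [<- Hl']].
    destruct (IHk _ _ Hl') as [H1 H2]. simpl. split; auto. intros [|i] Hi; simpl.
    + rewrite Nat.add_0_r; auto.
    + replace (i0 + S i)%nat with (S i0 + i)%nat by lia. apply H2; lia. Qed.

Lemma enum_complete c k : forall i0 l, length l = k -> (forall i, (i < k)%nat -> In (nth i l O) (c (i0 + i)%nat)) ->
  In l (enum c i0 k).
Proof. induction k; simpl; intros i0 l Hl H.
  - destruct l; simpl in *; [auto|lia].
  - destruct l as [|j l]; simpl in Hl; [lia|]. apply in_flat_map. exists j. split.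
    + specialize (H O ltac:(lia)). rewrite Nat.add_0_r in H. auto.
    + apply in_map. apply IHk; [lia|]. intros i Hi. specialize (H (S i) ltac:(lia)).
      replace (i0 + S i)%nat with (S i0 + i)%nat in H by lia. auto. Qed.

Definition cands (m n : nat) (B : mat) (i : nat) : list nat :=
  filter (fun j => Nat.eqb (sgm m B j) i) (seq 0 n).

Lemma cands_spec m n B i j : In j (cands m n B i) <-> (j < n)%nat /\ sgm m B j = i.
Proof. unfold cands. rewrite filter_In, in_seq, Nat.eqb_eq. split; intros; try lia. Qed.

Definition kl (l : list nat) : nat -> nat := fun i => nth i l O.

Definition Lall (m n : nat) (B : mat) := enum (cands m n B) 0 m.

Lemma Lall_valid m n B l : In l (Lall m n B) -> valid m n B (kl l).
Proof. intros H i Hi. destruct (enum_sound _ _ _ _ H) as [_ H2]. specialize (H2 i Hi).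
  apply cands_spec in H2. auto. Qed.

Lemma Lall_complete m n B kap : valid m n B kap ->
  exists l, In l (Lall m n B) /\ forall i, (i < m)%nat -> kl l i = kap i.
Proof. intros Hv. exists (map kap (seq 0 m)).
  assert (Hn : forall i, (i < m)%nat -> kl (map kap (seq 0 m)) i = kap i).
  { intros. unfold kl. rewrite nth_indep with (d' := kap O) by (rewrite length_map, length_seq; auto).
    rewrite map_nth, seq_nth; auto. }
  split; auto. apply enum_complete. rewrite length_map, length_seq; auto.
  intros i Hi. fold (kl (map kap (seq 0 m)) i). rewrite Hn by auto. apply cands_spec. apply Hv; auto. Qed.

Lemma exists_valid m n B : Bprops m n B -> exists kap, valid m n B kap.
Proof. intros HB. destruct HB as [HBn [Hr Hc]] eqn:E.
  exists (fun i => epsilon (inhabits O) (fun j => (j < n)%nat /\ B i j <> 0)).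
  intros i Hi. pose proof (epsilon_spec (inhabits O) (fun j => (j < n)%nat /\ B i j <> 0) (Hr i Hi)) as [H1 H2].
  split; auto. apply (sgm_pos m n); auto. destruct (HBn i _ Hi H1); auto. congruence. Qed.

Lemma list_min {T} (L : list T) (f : T -> R) : L <> nil -> exists x, In x L /\ forall y, In y L -> f x <= f y.
Proof. induction L; intros; [congruence|]. destruct L as [|b L].
  - exists a. split; [left; auto|]. intros y [<-|[]]; lra.
  - destruct IHL as [x [Hx Hmin]]. discriminate.
    destruct (Rle_dec (f a) (f x)).
    + exists a. split; [left; auto|]. intros y [<-|Hy]; [lra|]. specialize (Hmin y Hy); lra.
    + exists x. split; [right; auto|]. intros y [<-|Hy]; [lra|]. auto. Qed.

Lemma pigeon {T} (L : list T) (f : nat -> T) : (forall N, In (f N) L) ->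
  exists x, In x L /\ forall N0, exists N, (N >= N0)%nat /\ f N = x.
Proof. revert f. induction L; intros f Hf. destruct (Hf O).
  destruct (classic (forall N0, exists N, (N >= N0)%nat /\ f N = a)) as [H|H].
  - exists a; split; [left|]; auto.
  - apply not_all_ex_not in H. destruct H as [N0 HN0].
    destruct (IHL (fun N => f (N + N0)%nat)) as [x [Hx Hinf]].
    + intros N. destruct (Hf (N + N0)%nat); auto. exfalso. apply HN0. exists (N + N0)%nat. split; [lia|auto].
    + exists x. split; [right; auto|]. intros N1. destruct (Hinf N1) as [N [HN HfN]].
      exists (N + N0)%nat. split; [lia|auto]. Qed.

Definition tr (M : mat) : mat := fun i l => M l i.

Lemma dot_swap k M (w v : vec) :
  rsum k (fun i => w i * mulv k M v i) = rsum k (fun l => v l * mulv k (tr M) w l).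
Proof. unfold mulv, tr. transitivity (rsum k (fun i => rsum k (fun l => w i * M i l * v l))).
  apply rsum_ext; intros. rewrite <- rsum_scal. apply rsum_ext; intros; ring.
  rewrite rsum_swap. apply rsum_ext; intros. rewrite <- rsum_scal. apply rsum_ext; intros; ring. Qed.

Lemma some_ge m (w f g : nat -> R) : (1 <= m)%nat -> (forall i, (i < m)%nat -> 0 < w i) ->
  rsum m (fun i => w i * g i) <= rsum m (fun i => w i * f i) -> exists i, (i < m)%nat /\ g i <= f i.
Proof. intros Hm Hw H. apply NNPP. intro Hn.
  assert (rsum m (fun i => w i * f i) < rsum m (fun i => w i * g i)).
  { apply (rsum_lt m _ _ O). lia.
    - intros i Hi. apply Rmult_le_compat_l. apply Rlt_le, Hw; auto. apply Rlt_le, Rnot_le_lt. intro. apply Hn; eauto.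
    - apply Rmult_lt_compat_l. apply Hw; lia. apply Rnot_le_lt. intro. apply Hn. exists O; split; auto; lia. }
  lra. Qed.

Lemma hard_pos m n A B : (1 <= m)%nat -> Bprops m n B ->
  (forall i j, (i < m)%nat -> (j < n)%nat -> 0 < A i j) ->
  exists l, In l (Lall m n B) /\ forall x, vpos n x ->
    exists i, (i < m)%nat /\ cw m (Mk m A B (kl l)) * mulv n B x i <= mulv n A x i.
Proof.
  intros Hm HB HA. assert (HAn : forall i j, (i < m)%nat -> (j < n)%nat -> 0 <= A i j)
    by (intros; apply Rlt_le, HA; auto).
  set (f := fun l => cw m (Mk m A B (kl l))).
  destruct (list_min (Lall m n B) f) as [ls [Hls Hmin]].
  { destruct (exists_valid m n B HB) as [kap Hk]. destruct (Lall_complete m n B kap Hk) as [l [Hl _]].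
    destruct (Lall m n B); [contradiction|discriminate]. }
  exists ls. split; auto.
  set (kap := kl ls). assert (Hv : valid m n B kap) by (apply Lall_valid; auto).
  set (M := Mk m A B kap). set (c := cw m M).
  assert (HM : mpos m M) by (apply Mk_pos with n; auto).
  assert (HMt : mpos m (tr M)) by (intros i l Hi Hl; apply HM; auto).
  destruct (PF_pos m M Hm HM) as [v [Hv1 [_ Hv3]]].
  destruct (PF_pos m (tr M) Hm HMt) as [w [Hw1 [_ Hw3]]].
  fold c in Hv3.
  assert (Hwv : 0 < rsum m (fun i => w i * v i)).
  { apply (rsum_pos m _ O). lia. intros; apply Rmult_le_pos; apply Rlt_le; auto.
    apply Rmult_lt_0_compat; [apply Hw1|apply Hv1]; lia. }
  assert (Hcc : cw m (tr M) = c).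
  { pose proof (dot_swap m M w v).
    rewrite (rsum_ext m (fun i => w i * mulv m M v i) (fun i => c * (w i * v i))) in H
      by (intros; rewrite Hv3; auto; ring).
    rewrite (rsum_ext m (fun l => v l * mulv m (tr M) w l) (fun i => cw m (tr M) * (w i * v i))) in H
      by (intros; rewrite Hw3; auto; ring).
    rewrite !rsum_scal in H. apply (Rmult_eq_reg_r (rsum m (fun i => w i * v i))); lra. }
  rewrite Hcc in Hw3.
  assert (Key : forall j, (j < n)%nat -> c * (w (sgm m B j) * bb m B j) <= rsum m (fun i => w i * A i j)).
  { intros j0 Hj0. apply Rnot_lt_le. intro Hlt.
    destruct (sgm_spec m n B j0 HB Hj0) as [Hs0 [Hb0 _]]. set (i0 := sgm m B j0) in *.
    set (kap' := fun i => if Nat.eqb i i0 then j0 else kap i).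
    assert (Hv' : valid m n B kap').
    { intros i Hi. unfold kap'. destruct (Nat.eqb_spec i i0). subst; auto. apply Hv; auto. }
    destruct (Lall_complete m n B kap' Hv') as [l' [Hl' Heq']].
    set (M' := Mk m A B kap').
    assert (HM' : mpos m M') by (apply Mk_pos with n; auto).
    destruct (PF_pos m M' Hm HM') as [v' [Hv1' [_ Hv3']]].
    assert (Hf' : f l' = cw m M').
    { unfold f. apply cw_ext. intros i l Hi Hl. unfold Mk. rewrite Heq'; auto. }
    specialize (Hmin l' Hl'). rewrite Hf' in Hmin. fold c in Hmin. unfold f in Hmin. fold kap M c in Hmin.
    pose proof (dot_swap m M' w v') as Hd.
    rewrite (rsum_ext m (fun i => w i * mulv m M' v' i) (fun i => cw m M' * (w i * v' i))) in Hd
      by (intros; rewrite Hv3'; auto; ring).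
    rewrite rsum_scal in Hd.
    assert (Hi0 : mulv m (tr M') w i0 < c * w i0).
    { unfold mulv, tr, M', Mk, kap'. rewrite Nat.eqb_refl.
      rewrite (rsum_ext m _ (fun i => (w i * A i j0) * / bb m B j0)) by (intros; unfold Rdiv; ring).
      rewrite rsum_scalr. apply (Rmult_lt_reg_r (bb m B j0)); auto.
      rewrite Rmult_assoc, Rinv_l by lra. lra. }
    assert (Hlt2 : rsum m (fun l => v' l * mulv m (tr M') w l) < rsum m (fun l => v' l * (c * w l))).
    { apply (rsum_lt m _ _ i0); auto.
      - intros l Hl. apply Rmult_le_compat_l. apply Rlt_le, Hv1'; auto.
        destruct (Nat.eq_dec l i0).
        + subst l. apply Rlt_le; auto.
        + right. rewrite <- Hw3 by auto. unfold mulv, tr, M', M, Mk, kap'. apply rsum_ext. intros.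
          destruct (Nat.eqb_spec l i0); [congruence|auto].
      - apply Rmult_lt_compat_l. apply Hv1'; auto. auto. }
    rewrite (rsum_ext m (fun l => v' l * (c * w l)) (fun l => c * (w l * v' l))) in Hlt2 by (intros; ring).
    rewrite rsum_scal in Hlt2.
    assert (Hwv' : 0 < rsum m (fun i => w i * v' i)).
    { apply (rsum_pos m _ O). lia. intros; apply Rmult_le_pos; apply Rlt_le; auto.
      apply Rmult_lt_0_compat; [apply Hw1|apply Hv1']; lia. }
    assert (cw m M' < c) by (apply (Rmult_lt_reg_r (rsum m (fun i => w i * v' i))); lra).
    lra. }
  intros x Hx. apply (some_ge m w); auto.
  assert (E1 : forall F : mat, rsum m (fun i => w i * mulv n F x i) = rsum n (fun j => x j * rsum m (fun i => w i * F i j))).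
  { intros F. unfold mulv. transitivity (rsum m (fun i => rsum n (fun j => w i * F i j * x j))).
    apply rsum_ext; intros. rewrite <- rsum_scal. apply rsum_ext; intros; ring.
    rewrite rsum_swap. apply rsum_ext; intros. rewrite <- rsum_scal. apply rsum_ext; intros; ring. }
  rewrite (rsum_ext m _ (fun i => c * (w i * mulv n B x i))) by (intros; ring).
  rewrite rsum_scal, !E1. rewrite <- rsum_scal. apply rsum_le. intros j Hj.
  rewrite (B_single m n B w j HB Hj). specialize (Key j Hj). specialize (Hx j Hj). nra.
Qed.

Lemma finite_min_pos k (g : nat -> R) : (forall i, (i < k)%nat -> 0 < g i) -> exists gm, 0 < gm /\ forall i, (i < k)%nat -> gm <= g i.
Proof. intros. destruct (finite_strict k (fun i => - g i) 0) as [t [Ht1 Ht2]].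
  intros; specialize (H i H0); lra. exists (- t). split; [lra|]. intros; specialize (Ht2 i H0); simpl in Ht2; lra. Qed.

Lemma hard m n A B : (1 <= m)%nat -> Bprops m n B ->
  (forall i j, (i < m)%nat -> (j < n)%nat -> 0 <= A i j) ->
  exists l, In l (Lall m n B) /\ forall x, vpos n x ->
    exists i, (i < m)%nat /\ cw m (Mk m A B (kl l)) * mulv n B x i <= mulv n A x i.
Proof.
  intros Hm HB HA.
  assert (Hep : forall N, 0 < / INR (S N)) by (intros; apply Rinv_0_lt_compat, lt_0_INR; lia).
  assert (G : forall N : nat, {l : list nat | In l (Lall m n B) /\ forall x, vpos n x ->
    exists i, (i < m)%nat /\ cw m (Mk m (pert A (/ INR (S N))) B (kl l)) * mulv n B x i <= mulv n (pert A (/ INR (S N))) x i}).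
  { intros N. apply constructive_indefinite_description. apply hard_pos; auto.
    intros i j Hi Hj. unfold pert. specialize (HA i j Hi Hj). specialize (Hep N). lra. }
  destruct (pigeon (Lall m n B) (fun N => proj1_sig (G N))) as [l [Hl Hinf]].
  { intros N. apply (proj1 (proj2_sig (G N))). }
  exists l. split; auto. intros x Hx.
  set (c := cw m (Mk m A B (kl l))).
  assert (Hv : valid m n B (kl l)) by (apply Lall_valid; auto).
  assert (HBx : forall i, (i < m)%nat -> 0 < mulv n B x i) by (apply Bpos; auto).
  apply NNPP. intro Hn.
  assert (Hgap : forall i, (i < m)%nat -> 0 < c * mulv n B x i - mulv n A x i).
  { intros i Hi. apply Rlt_0_minus. apply Rnot_le_lt. intro. apply Hn. exists i; split; auto. }
  destruct (finite_min_pos m _ Hgap) as [gm [Hgm Hgm2]].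
  assert (Hsx : 0 <= rsum n x) by (apply rsum_nonneg; intros; apply Rlt_le, Hx; auto).
  destruct (inv_succ_small (gm / (rsum n x + 1))) as [N0 HN0]. apply Rdiv_lt_0_compat; lra.
  destruct (Hinf N0) as [N [HN HlN]].
  destruct (proj2 (proj2_sig (G N)) x Hx) as [i [Hi Hc]]. rewrite HlN in Hc.
  assert (Hmono : c <= cw m (Mk m (pert A (/ INR (S N))) B (kl l))).
  { apply cw_mono; auto. apply Mk_nonneg with n; auto. intros i' l' Hi' Hl'. unfold Mk, pert.
    destruct (Hv l' Hl'). destruct (sgm_spec m n B (kl l l') HB H) as [_ [Hb _]].
    unfold Rdiv. apply Rmult_le_compat_r. apply Rlt_le, Rinv_0_lt_compat; auto. specialize (Hep N). lra. }
  rewrite mulv_pert in Hc. specialize (HN0 N HN). specialize (Hgm2 i Hi). specialize (HBx i Hi).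
  assert (c * mulv n B x i <= cw m (Mk m (pert A (/ INR (S N))) B (kl l)) * mulv n B x i)
    by (apply Rmult_le_compat_r; lra).
  assert (/ INR (S N) * rsum n x < gm).
  { apply (Rmult_lt_compat_r (rsum n x + 1)) in HN0; [|lra]. unfold Rdiv in HN0.
    rewrite Rmult_assoc, Rinv_l in HN0 by lra. specialize (Hep N). nra. }
  lra.
Qed.

Definition kk (K : list nat) (l : nat) : nat := nth l K O.
Definition ppi (m : nat) (B : mat) (K : list nat) (l : nat) : nat := sgm m B (kk K l).
Definition lam (m : nat) (B : mat) (K : list nat) (i : nat) : nat :=
  epsilon (inhabits O) (fun l => (l < m)%nat /\ ppi m B K l = i).
Definition kapK (m : nat) (B : mat) (K : list nat) : nat -> nat := fun i => kk K (lam m B K i).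

Lemma kk_lt m n B K l : in_MB m n B K -> (l < m)%nat -> (kk K l < n)%nat.
Proof. intros [[_ H1] [H2 _]] Hl. apply H1. unfold kk. apply nth_In. lia. Qed.

Lemma ppi_spec m n B K l : Bprops m n B -> in_MB m n B K -> (l < m)%nat ->
  (ppi m B K l < m)%nat /\ 0 < B (ppi m B K l) (kk K l) /\ bb m B (kk K l) = B (ppi m B K l) (kk K l).
Proof. intros HB HK Hl. pose proof (kk_lt m n B K l HK Hl).
  destruct (sgm_spec m n B _ HB H) as [H1 [H2 _]]. unfold ppi. auto. Qed.

Lemma ppi_inj m n B K l l' : Bprops m n B -> in_MB m n B K -> (l < m)%nat -> (l' < m)%nat ->
  ppi m B K l = ppi m B K l' -> l = l'.
Proof. intros HB HK Hl Hl' He.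
  destruct (ppi_spec m n B K l HB HK Hl) as [H1 [H2 _]]. destruct (ppi_spec m n B K l' HB HK Hl') as [H1' [H2' _]].
  destruct HK as [_ [_ [_ [Hrow _]]]]. destruct (Hrow _ H1) as [j [Hj [Hp Hu]]].
  unfold colsub in Hu. rewrite (Hu l Hl H2). rewrite He in *. rewrite (Hu l' Hl' H2'). auto. Qed.

Lemma ppi_surj m n B K i : Bprops m n B -> in_MB m n B K -> (i < m)%nat -> exists l, (l < m)%nat /\ ppi m B K l = i.
Proof. intros HB HK Hi. pose proof HK as HK'. destruct HK' as [_ [_ [_ [Hrow _]]]].
  destruct (Hrow i Hi) as [l [Hl [Hp _]]]. exists l. split; auto. unfold ppi.
  apply (sgm_pos m n); auto. apply (kk_lt m n B K l HK Hl). Qed.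

Lemma lam_spec m n B K i : Bprops m n B -> in_MB m n B K -> (i < m)%nat ->
  (lam m B K i < m)%nat /\ ppi m B K (lam m B K i) = i.
Proof. intros. unfold lam. apply epsilon_spec. apply (ppi_surj m n); auto. Qed.

Lemma lam_ppi m n B K l : Bprops m n B -> in_MB m n B K -> (l < m)%nat -> lam m B K (ppi m B K l) = l.
Proof. intros HB HK Hl. destruct (ppi_spec m n B K l HB HK Hl) as [H1 _].
  destruct (lam_spec m n B K _ HB HK H1) as [H2 H3]. apply (ppi_inj m n B K); auto. Qed.

Lemma kapK_ppi m n B K l : Bprops m n B -> in_MB m n B K -> (l < m)%nat -> kapK m B K (ppi m B K l) = kk K l.
Proof. intros. unfold kapK. rewrite (lam_ppi m n); auto. Qed.

Lemma kapK_valid m n B K : Bprops m n B -> in_MB m n B K -> valid m n B (kapK m B K).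
Proof. intros HB HK i Hi. destruct (lam_spec m n B K i HB HK Hi) as [H1 H2]. unfold kapK. split.
  apply (kk_lt m n B K); auto. apply H2. Qed.

Lemma In_K m n B K j : Bprops m n B -> in_MB m n B K -> (j < n)%nat ->
  In j K <-> inimg m B (kapK m B K) j = true.
Proof. intros HB HK Hj. rewrite (inimg_true m n B); auto; [|apply kapK_valid; auto]. split.
  - intros Hin. destruct (In_nth K j O Hin) as [l [Hl He]]. destruct HK as [H0 [Hlen H1]].
    assert (HK : in_MB m n B K) by (split; auto). rewrite Hlen in Hl.
    exists (ppi m B K l). split. apply (ppi_spec m n B K l HB HK Hl). rewrite (kapK_ppi m n); auto.
  - intros [i [Hi <-]]. unfold kapK, kk. apply nth_In. pose proof (lam_spec m n B K i HB HK Hi) as [Hl _].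
    destruct HK as [_ [-> _]]. auto. Qed.

Definition Nexp (m : nat) (B : mat) (K : list nat) : mat :=
  fun l i => if Nat.eqb i (ppi m B K l) then / bb m B (kk K l) else 0.

Lemma Nexp_inverse m n B K : Bprops m n B -> in_MB m n B K -> is_inverse m (colsub B K) (Nexp m B K).
Proof.
  intros HB HK i j Hi Hj. split.
  - unfold mulm. destruct (lam_spec m n B K i HB HK Hi) as [Hl Hpl].
    rewrite (rsum_single m _ (lam m B K i)); auto.
    + unfold colsub, Nexp, idm. fold (kk K (lam m B K i)). rewrite Hpl.
      destruct (ppi_spec m n B K _ HB HK Hl) as [_ [Hp Hb]]. rewrite Hb, Hpl.
      destruct (Nat.eqb_spec j i); destruct (Nat.eqb_spec i j); try lia. rewrite Hpl in Hp. field. lra. ring.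
    + intros l Hl' Hne. unfold colsub. fold (kk K l).
      pose proof (kk_lt m n B K l HK Hl'). destruct (sgm_spec m n B _ HB H) as [_ [_ H3]].
      rewrite H3; auto; [ring|]. intro He. apply Hne. fold (ppi m B K l) in He. rewrite He.
      rewrite (lam_ppi m n); auto.
  - unfold mulm. destruct (ppi_spec m n B K i HB HK Hi) as [Hp1 [Hp2 Hb]].
    rewrite (rsum_single m _ (ppi m B K i)); auto.
    + unfold Nexp, colsub, idm. rewrite Nat.eqb_refl. fold (kk K j).
      destruct (Nat.eqb_spec i j).
      * subst. rewrite Hb. field. lra.
      * pose proof (kk_lt m n B K j HK Hj). destruct (sgm_spec m n B _ HB H) as [_ [_ H3]].
        rewrite H3; auto; [ring|]. intro He. apply n0. apply (ppi_inj m n B K); auto.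
    + intros a Ha Hne. unfold Nexp. destruct (Nat.eqb_spec a (ppi m B K i)); [congruence|ring].
Qed.

Lemma inverse_unique m M N N' : is_inverse m M N -> is_inverse m M N' ->
  forall l i, (l < m)%nat -> (i < m)%nat -> N' l i = N l i.
Proof.
  intros HN HN' l i Hl Hi.
  transitivity (rsum m (fun a => N' l a * idm a i)).
  { rewrite (rsum_single m _ i); auto. unfold idm. rewrite Nat.eqb_refl. ring.
    intros a Ha Hne. unfold idm. destruct (Nat.eqb_spec a i); [congruence|ring]. }
  transitivity (rsum m (fun a => N' l a * rsum m (fun b => M a b * N b i))).
  { apply rsum_ext. intros a Ha. destruct (HN a i Ha Hi) as [H1 _]. unfold mulm in H1. rewrite H1. auto. }
  transitivity (rsum m (fun b => rsum m (fun a => N' l a * M a b) * N b i)).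
  { transitivity (rsum m (fun a => rsum m (fun b => N' l a * M a b * N b i))).
    apply rsum_ext; intros. rewrite <- rsum_scal. apply rsum_ext; intros; ring.
    rewrite rsum_swap. apply rsum_ext; intros. rewrite <- rsum_scalr. auto. }
  transitivity (rsum m (fun b => idm l b * N b i)).
  { apply rsum_ext. intros b Hb. destruct (HN' l b Hl Hb) as [_ H2]. unfold mulm in H2. rewrite H2. auto. }
  rewrite (rsum_single m _ l); auto. unfold idm. rewrite Nat.eqb_refl. ring.
  intros a Ha Hne. unfold idm. destruct (Nat.eqb_spec l a); [congruence|ring].
Qed.

Lemma invm_eq m n B K : Bprops m n B -> in_MB m n B K ->
  forall l i, (l < m)%nat -> (i < m)%nat -> invm m (colsub B K) l i = Nexp m B K l i.
Proof. intros HB HK. apply (inverse_unique m (colsub B K)). apply Nexp_inverse with n; auto.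
  unfold invm. apply epsilon_spec. exists (Nexp m B K). apply Nexp_inverse with n; auto. Qed.

Lemma CK_eq m n A B K : Bprops m n B -> in_MB m n B K ->
  forall l l', (l < m)%nat -> (l' < m)%nat -> CK m A B K l l' = A (ppi m B K l) (kk K l') / bb m B (kk K l).
Proof. intros HB HK l l' Hl Hl'. unfold CK, mulm.
  rewrite (rsum_ext m _ (fun i => Nexp m B K l i * colsub A K i l')) by (intros; rewrite (invm_eq m n); auto).
  destruct (ppi_spec m n B K l HB HK Hl) as [Hp1 _].
  rewrite (rsum_single m _ (ppi m B K l)); auto.
  - unfold Nexp, colsub. rewrite Nat.eqb_refl. unfold kk, Rdiv. ring.
  - intros a Ha Hne. unfold Nexp. destruct (Nat.eqb_spec a (ppi m B K l)); [congruence|ring]. Qed.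

Definition TK (m : nat) (B : mat) (K : list nat) (z : vec) : vec :=
  fun l => z (ppi m B K l) / bb m B (kk K l).

Lemma sum_ppi m n B K (g : nat -> R) : Bprops m n B -> in_MB m n B K ->
  rsum m g = rsum m (fun l => g (ppi m B K l)).
Proof. intros HB HK. apply reindex.
  - intros; apply (ppi_spec m n B K); auto.
  - intros; apply (ppi_inj m n B K); auto.
  - intros j Hj Hn. exfalso. destruct (ppi_surj m n B K j HB HK Hj) as [l [Hl He]]. eapply Hn; eauto. Qed.

Lemma CK_TK m n A B K z l : Bprops m n B -> in_MB m n B K -> (l < m)%nat ->
  mulv m (CK m A B K) (TK m B K z) l = mulv m (Mk m A B (kapK m B K)) z (ppi m B K l) / bb m B (kk K l).
Proof. intros HB HK Hl. unfold mulv at 2. rewrite (sum_ppi m n B K _ HB HK).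
  unfold Rdiv. rewrite <- rsum_scalr. unfold mulv. apply rsum_ext. intros l' Hl'.
  rewrite (CK_eq m n A B K HB HK) by auto. unfold Mk, TK. rewrite (kapK_ppi m n) by auto.
  unfold Rdiv. ring. Qed.

Lemma TK_pos m n B K z : Bprops m n B -> in_MB m n B K -> vpos m z -> vpos m (TK m B K z).
Proof. intros HB HK Hz l Hl. destruct (ppi_spec m n B K l HB HK Hl) as [H1 [H2 H3]]. unfold TK.
  rewrite H3. apply Rdiv_lt_0_compat; auto. Qed.

Lemma TK_nonneg m n B K z : Bprops m n B -> in_MB m n B K -> vnonneg m z -> vnonneg m (TK m B K z).
Proof. intros HB HK Hz l Hl. destruct (ppi_spec m n B K l HB HK Hl) as [H1 [H2 H3]]. unfold TK.
  rewrite H3. unfold Rdiv. apply Rmult_le_pos; auto. apply Rlt_le, Rinv_0_lt_compat; auto. Qed.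

Lemma sr_CK m n A B K : (1 <= m)%nat -> Bprops m n B ->
  (forall i j, (i < m)%nat -> (j < n)%nat -> 0 <= A i j) -> in_MB m n B K ->
  spectral_radius m (CK m A B K) = cw m (Mk m A B (kapK m B K)).
Proof.
  intros Hm HB HA HK. set (M := Mk m A B (kapK m B K)).
  assert (Hv : valid m n B (kapK m B K)) by (apply kapK_valid; auto).
  assert (HM : mnonneg m M) by (apply Mk_nonneg with n; auto).
  assert (Hsc : forall z t l, (l < m)%nat -> (forall i, (i < m)%nat -> mulv m M z i <= t * z i) ->
     mulv m (CK m A B K) (TK m B K z) l <= t * TK m B K z l).
  { intros z t l Hl H. rewrite (CK_TK m n) by auto. fold M. unfold TK.
    destruct (ppi_spec m n B K l HB HK Hl) as [H1 [H2 H3]]. rewrite H3.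
    apply (Rmult_le_reg_r (B (ppi m B K l) (kk K l))); auto. unfold Rdiv.
    rewrite !Rmult_assoc, Rinv_l by lra. rewrite !Rmult_1_r. apply H; auto. }
  apply spectral_radius_char; auto.
  - intros l l' Hl Hl'. rewrite (CK_eq m n A B K HB HK) by auto.
    destruct (ppi_spec m n B K l HB HK Hl) as [H1 [H2 H3]]. rewrite H3.
    unfold Rdiv. apply Rmult_le_pos. apply HA; auto. apply (kk_lt m n B K); auto.
    apply Rlt_le, Rinv_0_lt_compat; auto.
  - apply cw_ge0; auto.
  - destruct (PF_gen m M Hm HM) as [z [zs [ts [Hz1 [Hz2 [Hz3 _]]]]]].
    exists (TK m B K z). split; [|split].
    + apply TK_nonneg with n; auto.
    + destruct (sum1_pos_entry m z Hz1 Hz2) as [i [Hi Hzi]].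
      destruct (lam_spec m n B K i HB HK Hi) as [H1 H2]. exists (lam m B K i). split; auto.
      unfold TK. rewrite H2. destruct (ppi_spec m n B K _ HB HK H1) as [_ [H4 H5]]. rewrite H5.
      apply Rgt_not_eq, Rdiv_lt_0_compat; auto.
    + intros l Hl. rewrite (CK_TK m n) by auto. fold M. rewrite Hz3.
      unfold TK, Rdiv. ring. apply (ppi_spec m n B K l HB HK Hl).
  - intros t Ht. destruct (cw_approx m M (t - cw m M) Hm HM) as [t' [[z [Hz1 Hz2]] Ht']]. lra.
    exists (TK m B K z). split. apply TK_pos with n; auto.
    intros l Hl. apply Hsc; auto. intros i Hi. eapply Rle_trans. apply Hz2; auto.
    apply Rmult_le_compat_r. apply Rlt_le, Hz1; auto. lra.
Qed.

Lemma seq_sorted a k : StronglySorted lt (seq a k).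
Proof. revert a; induction k; simpl; intros; constructor; auto.
  apply Forall_forall. intros x Hx. apply in_seq in Hx. lia. Qed.

Lemma filter_sorted (f : nat -> bool) l : StronglySorted lt l -> StronglySorted lt (filter f l).
Proof. induction l; simpl; intros H; auto. inversion H; subst. destruct (f a); auto.
  constructor; auto. apply Forall_forall. intros x Hx. apply filter_In in Hx.
  rewrite Forall_forall in H3. apply H3; tauto. Qed.

Lemma length_filter_seq (f : nat -> bool) k :
  INR (length (filter f (seq 0 k))) = rsum k (fun j => if f j then 1 else 0).
Proof. induction k; [simpl; auto|]. rewrite seq_S, filter_app, length_app, plus_INR, IHk. simpl.
  destruct (f k); simpl; lra. Qed.

Lemma rsum_one k : rsum k (fun _ => 1) = INR k.
Proof. induction k; [simpl; auto|]. simpl rsum. rewrite IHk, (S_INR k); auto. Qed.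

Definition Kof (m n : nat) (B : mat) (kap : nat -> nat) : list nat := filter (inimg m B kap) (seq 0 n).

Lemma Kof_In m n B kap j : In j (Kof m n B kap) <-> (j < n)%nat /\ inimg m B kap j = true.
Proof. unfold Kof. rewrite filter_In, in_seq. split; intros [H1 H2]; split; auto; lia. Qed.

Lemma Kof_inMB m n B kap : Bprops m n B -> valid m n B kap ->
  in_MB m n B (Kof m n B kap) /\ forall i, (i < m)%nat -> kapK m B (Kof m n B kap) i = kap i.
Proof.
  intros HB Hv. set (K := Kof m n B kap).
  assert (Hlen : length K = m).
  { apply INR_eq. unfold K, Kof. rewrite length_filter_seq. rewrite (sum_on_img m n B kap); auto.
    - rewrite (rsum_ext m _ (fun _ => 1)). apply rsum_one. intros. rewrite (inimg_kap m n); auto.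
    - intros j Hj Hf. rewrite Hf; auto. }
  assert (HND : NoDup K) by (apply NoDup_filter, seq_NoDup).
  assert (HKn : forall j, In j K -> (j < n)%nat) by (intros j Hj; apply Kof_In in Hj; tauto).
  assert (Hin : forall l, (l < m)%nat -> In (nth l K O) K) by (intros; apply nth_In; lia).
  assert (HKB : in_MB m n B K).
  { split; [split|split]; auto.
    - apply filter_sorted, seq_sorted.
    - split; [|split].
      + intros i l Hi Hl. unfold colsub. apply (proj1 HB); auto.
      + intros i Hi. destruct (Hv i Hi) as [Hk1 Hk2].
        assert (HinK : In (kap i) K) by (apply Kof_In; split; auto; apply (inimg_kap m n); auto).
        destruct (In_nth K (kap i) O HinK) as [l [Hl Hnl]]. rewrite Hlen in Hl.
        exists l. split; auto. unfold colsub. rewrite Hnl. split.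
        * destruct (sgm_spec m n B (kap i) HB Hk1) as [_ [Hb _]]. unfold bb in Hb. rewrite Hk2 in Hb. auto.
        * intros l' Hl' Hp. apply (proj1 (NoDup_nth K O) HND); try lia. rewrite Hnl.
          pose proof (Hin l' Hl') as Hl'K. apply Kof_In in Hl'K. destruct Hl'K as [Hj' Himg].
          unfold inimg in Himg. apply Nat.eqb_eq in Himg. rewrite <- Himg.
          f_equal. apply (sgm_pos m n); auto.
      + intros l Hl. apply (proj2 (proj2 HB)). apply HKn, Hin; auto. }
  split; auto. intros i Hi. destruct (lam_spec m n B K i HB HKB Hi) as [H1 H2].
  unfold kapK. assert (HI : In (kk K (lam m B K i)) K) by (apply Hin; auto).
  apply Kof_In in HI. destruct HI as [_ HI]. unfold inimg in HI. apply Nat.eqb_eq in HI.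
  unfold ppi in H2. rewrite H2 in HI. auto.
Qed.

Lemma lower_cw m n A B kap c : (1 <= m)%nat -> Bprops m n B ->
  (forall i j, (i < m)%nat -> (j < n)%nat -> 0 <= A i j) -> valid m n B kap ->
  (forall x, vpos n x -> exists i, (i < m)%nat /\ c * mulv n B x i <= mulv n A x i) ->
  c <= cw m (Mk m A B kap).
Proof.
  intros Hm HB HA Hv Hlow. set (M := Mk m A B kap).
  assert (HM : mnonneg m M) by (apply Mk_nonneg with n; auto).
  apply Rnot_lt_le. intro Hlt. set (e := (c - cw m M) / 3).
  destruct (cw_approx m M e Hm HM) as [t [Ht1 Ht2]]. unfold e; lra.
  assert (Ht0 : 0 <= t) by (eapply Scw_ge0; eauto).
  destruct Ht1 as [z [Hz Hz2]].
  destruct (emb_approx m n A B kap z t e HB HA Hv Hz Ht0 Hz2) as [x [Hx [Hx2 _]]]. unfold e; lra.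
  destruct (Hlow x Hx) as [i [Hi Hc]]. specialize (Hx2 i Hi). pose proof (Bpos m n B x HB Hx i Hi).
  assert (c * mulv n B x i <= (t + e) * mulv n B x i) by lra.
  apply Rmult_le_reg_r in H0; auto. unfold e in *. lra.
Qed.

Lemma rho_value m n A B kap : (1 <= m)%nat -> Bprops m n B ->
  (forall i j, (i < m)%nat -> (j < n)%nat -> 0 <= A i j) -> valid m n B kap ->
  (forall x, vpos n x -> exists i, (i < m)%nat /\ cw m (Mk m A B kap) * mulv n B x i <= mulv n A x i) ->
  rhoAB m n A B = Fin (cw m (Mk m A B kap)).
Proof.
  intros Hm HB HA Hv Hlow. set (M := Mk m A B kap). fold M in Hlow.
  assert (HM : mnonneg m M) by (apply Mk_nonneg with n; auto).
  apply rho_char.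
  - intros x Hx. destruct (Hlow x Hx) as [i [Hi Hc]]. apply (rAB_ge_of m n A B x _ i); auto.
    apply (Bpos m n B x); auto.
  - intros e He. destruct (cw_approx m M (e/2) Hm HM) as [t [Ht1 Ht2]]. lra.
    assert (Ht0 : 0 <= t) by (eapply Scw_ge0; eauto).
    destruct Ht1 as [z [Hz Hz2]].
    destruct (emb_approx m n A B kap z t (e/2) HB HA Hv Hz Ht0 Hz2) as [x [Hx [Hx2 _]]]. lra.
    exists x. split; auto. eapply Rbar_le_trans. apply rAB_le_of. apply (Bpos m n B x); auto. 2: apply Hx2. lra.
    simpl. lra.
Qed.

Lemma Bz_img m n B kap z : Bprops m n B -> valid m n B kap ->
  (forall j, (j < n)%nat -> inimg m B kap j = false -> z j = 0) ->
  forall i, (i < m)%nat -> mulv n B z i = bb m B (kap i) * z (kap i).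
Proof. intros HB Hv Hz i Hi. unfold mulv. rewrite (sum_on_img m n B kap); auto.
  - rewrite (rsum_single m _ i); auto.
    + destruct (Hv i Hi). unfold bb. rewrite H0. auto.
    + intros i' Hi' Hne. destruct (Hv i' Hi'). destruct (sgm_spec m n B _ HB H) as [_ [_ H3]].
      rewrite H3; auto. ring. congruence.
  - intros j Hj Hf. rewrite Hz; auto. ring. Qed.

Lemma Rbar_antisym a c : Rbar_le a (Fin c) -> Rbar_le (Fin c) a -> a = Fin c.
Proof. destruct a; simpl; intros; [f_equal; lra|contradiction]. Qed.

Lemma quot_eig c b : 0 <= c -> 0 <= b -> Rbar_le (quot (c * b) b) (Fin c).
Proof. intros. unfold quot. destruct (Req_dec_T b 0).
  - subst. rewrite Rmult_0_r. destruct (Req_dec_T 0 0); simpl; [lra|congruence].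
  - simpl. right. field. auto. Qed.

Lemma cv_close (u v : nat -> R) l : (forall N, Rabs (u N - v N) <= / INR (S N)) -> Un_cv v l -> Un_cv u l.
Proof. intros H Hv e He. destruct (Hv (e/2)) as [N1 HN1]. lra.
  destruct (inv_succ_small (e/2)) as [N2 HN2]. lra.
  exists (max N1 N2). intros N HN. unfold Rdist in *. specialize (HN1 N ltac:(lia)).
  specialize (HN2 N ltac:(lia)). specialize (H N).
  replace (u N - l) with ((u N - v N) + (v N - l)) by ring.
  eapply Rle_lt_trans. apply Rabs_triang. lra. Qed.

Lemma Emb_scal m B kap z s j : Emb m B kap (fun i => z i / s) j = Emb m B kap z j / s.
Proof. unfold Emb. destruct (inimg m B kap j); unfold Rdiv; ring. Qed.

Lemma part2 m n A B K c : (1 <= m)%nat -> Bprops m n B ->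
  (forall i j, (i < m)%nat -> (j < n)%nat -> 0 <= A i j) -> in_MB m n B K ->
  (forall x, vpos n x -> exists i, (i < m)%nat /\ c * mulv n B x i <= mulv n A x i) ->
  rhoAB m n A B = Fin c -> cw m (Mk m A B (kapK m B K)) = c ->
  exists y, in_Pi n y /\ supp_in n y K /\ optimal m n A B y /\ GPF_eigenvector m n A B y.
Proof.
  intros Hm HB HA HK Hlow Hrho Hc.
  set (kap := kapK m B K). set (M := Mk m A B kap). fold kap M in Hc.
  assert (Hv : valid m n B kap) by (apply kapK_valid; auto).
  assert (HM : mnonneg m M) by (apply Mk_nonneg with n; auto).
  assert (Hc0 : 0 <= c) by (rewrite <- Hc; apply cw_ge0; auto).
  destruct (PF_gen m M Hm HM) as [z [zs [ts [Hz1 [Hz2 [Hz3 [Hzs1 [Hzs2 [Hts Hzcv]]]]]]]]].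
  rewrite Hc in Hz3, Hts.
  destruct (sum1_pos_entry m z Hz1 Hz2) as [i1 [Hi1 Hzi1]].
  assert (HE0 : vnonneg n (Emb m B kap z)) by (apply Emb_nonneg; auto).
  destruct (Hv i1 Hi1) as [Hk1 Hs1].
  destruct (sgm_spec m n B (kap i1) HB Hk1) as [_ [Hb1 _]].
  assert (HEk : 0 < Emb m B kap z (kap i1)) by (rewrite (Emb_kap m n); auto; apply Rdiv_lt_0_compat; auto).
  set (s := rsum n (Emb m B kap z)).
  assert (Hs : 0 < s) by (apply (rsum_pos n _ (kap i1)); auto).
  set (z' := fun i => z i / s). set (y := Emb m B kap z').
  assert (Hyeq : forall j, y j = Emb m B kap z j / s) by (intros; apply Emb_scal).
  assert (Hy0 : vnonneg n y) by (intros j Hj; rewrite Hyeq; unfold Rdiv; apply Rmult_le_pos;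
    [apply HE0; auto| apply Rlt_le, Rinv_0_lt_compat; auto]).
  assert (Hynz : vnonzero n y).
  { exists (kap i1). split; auto. rewrite Hyeq. apply Rgt_not_eq, Rdiv_lt_0_compat; auto. }
  assert (HBy : forall i, (i < m)%nat -> mulv n B y i = z' i) by (intros; apply (B_Emb m n); auto).
  assert (HAy : forall i, (i < m)%nat -> mulv n A y i = c * mulv n B y i).
  { intros i Hi. unfold y. rewrite (A_Emb m n A B kap z' i HB Hv). rewrite (B_Emb m n) by auto.
    fold M. replace (mulv m M z' i) with (/ s * mulv m M z i)
      by (unfold mulv, z'; rewrite <- rsum_scal; apply rsum_ext; intros; unfold Rdiv; ring).
    rewrite Hz3 by auto. unfold z', Rdiv. ring. }
  assert (HMz' : forall i, (i < m)%nat -> 0 <= z' i) by (intros; unfold z', Rdiv; apply Rmult_le_pos;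
    [apply Hz1; auto| apply Rlt_le, Rinv_0_lt_compat; auto]).
  assert (HrAB : rAB m n A B y = Fin c).
  { apply Rbar_antisym.
    - unfold rAB. apply maxn_le; auto. intros i Hi. rewrite HAy by auto. apply quot_eig; auto.
      rewrite HBy; auto.
    - apply (rAB_ge_of m n A B y c i1); auto. rewrite HBy by auto. unfold z'. apply Rdiv_lt_0_compat; auto.
      rewrite HAy; auto; lra. }
  assert (Hep : forall N, 0 < / INR (S N)) by (intros; apply Rinv_0_lt_compat, lt_0_INR; lia).
  assert (G : forall N : nat, {x : vec | vpos n x /\
      (forall i, (i < m)%nat -> mulv n A x i <= (ts N + / INR (S N)) * mulv n B x i) /\
      (forall j, (j < n)%nat -> Rabs (x j - Emb m B kap (fun i => zs N i / s) j) <= / INR (S N))}).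
  { intros N. apply constructive_indefinite_description. apply (emb_approx m n A B kap); auto.
    - intros i Hi. unfold Rdiv. apply Rmult_lt_0_compat. apply Hzs1; auto. apply Rinv_0_lt_compat; auto.
    - eapply Scw_ge0; eauto. exists (zs N). split; auto.
    - intros i Hi. replace (mulv m (Mk m A B kap) (fun i => zs N i / s) i) with (/ s * mulv m M (zs N) i)
        by (unfold mulv, M; rewrite <- rsum_scal; apply rsum_ext; intros; unfold Rdiv; ring).
      specialize (Hzs2 N i Hi). assert (0 < / s) by (apply Rinv_0_lt_compat; auto).
      unfold Rdiv. nra.
    - apply Hep. }
  set (ys := fun N => proj1_sig (G N)).
  assert (Hys : forall N, vpos n (ys N) /\
      (forall i, (i < m)%nat -> mulv n A (ys N) i <= (ts N + / INR (S N)) * mulv n B (ys N) i) /\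
      (forall j, (j < n)%nat -> Rabs (ys N j - Emb m B kap (fun i => zs N i / s) j) <= / INR (S N)))
    by (intros; apply (proj2_sig (G N))).
  exists y. split; [|split; [|split]].
  - split; auto. rewrite (rsum_ext n _ (fun j => Emb m B kap z j * / s)) by (intros; rewrite Hyeq; auto).
    rewrite rsum_scalr. fold s. field. lra.
  - intros j Hj Hyj. apply (In_K m n B K j HB HK Hj). fold kap. destruct (inimg m B kap j) eqn:E; auto.
    exfalso. apply Hyj. unfold y, Emb. rewrite E. auto.
  - split; [|split; [|split]]; auto. rewrite Hrho; auto.
    exists ys. split; [|split].
    + intros N; apply Hys.
    + intros j Hj. apply (cv_close _ (fun N => Emb m B kap (fun i => zs N i / s) j)).
      intros N. apply Hys; auto.
      unfold y, Emb. destruct (inimg m B kap j). 2: apply cv_const.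
      unfold Rdiv. apply CV_mult; [|apply cv_const]. apply CV_mult; [|apply cv_const].
      apply Hzcv. apply (sgm_spec m n B j HB Hj).
    + rewrite Hrho. intros e He.
      destruct (Hts (e/2)) as [N1 HN1]. lra.
      destruct (inv_succ_small (e/2)) as [N2 HN2]. lra.
      exists (max N1 N2). intros N HN.
      destruct (Hys N) as [Hp [Hle _]].
      assert (HBp : forall i, (i < m)%nat -> 0 < mulv n B (ys N) i) by (apply (Bpos m n B); auto).
      destruct (rAB_fin m n A B (ys N) HBp) as [r Hr]. exists r. split; auto.
      assert (Hts0 : 0 <= ts N) by (eapply Scw_ge0; eauto; exists (zs N); split; auto).
      assert (H1 : Rbar_le (rAB m n A B (ys N)) (Fin (ts N + / INR (S N)))).
      { apply rAB_le_of; auto. specialize (Hep N). lra. }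
      destruct (Hlow (ys N) Hp) as [i [Hi Hci]].
      assert (H2 : Rbar_le (Fin c) (rAB m n A B (ys N))) by (apply (rAB_ge_of m n A B _ c i); auto).
      rewrite Hr in H1, H2. unfold Rbar_le in H1, H2. specialize (HN1 N ltac:(lia)). specialize (HN2 N ltac:(lia)).
      unfold Rdist in HN1. apply Rabs_def2 in HN1. rewrite Rabs_right; lra.
  - split; [|split]; auto. exists c. split; auto.
Qed.

Lemma part3 m n A B K c y : (1 <= m)%nat -> Bprops m n B ->
  (forall i j, (i < m)%nat -> (j < n)%nat -> 0 <= A i j) -> in_MB m n B K ->
  irreducible m (CK m A B K) -> rhoAB m n A B = Fin c ->
  supp_in n y K -> optimal m n A B y -> minimal_optimal m n A B y.
Proof.
  intros Hm HB HA HK Hirr Hrho Hsupp Hopt. split; auto.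
  intros [z [[Hz0 [Hznz [Hzr _]]] [Hsub [j0 [Hj0 [Hyj0 Hzj0]]]]]].
  set (kap := kapK m B K). set (M := Mk m A B kap).
  assert (Hv : valid m n B kap) by (apply kapK_valid; auto).
  rewrite Hrho in Hzr.
  assert (Hle : forall i, (i < m)%nat -> mulv n A z i <= c * mulv n B z i).
  { apply rAB_le_inv; [|rewrite Hzr; simpl; lra]. intros i Hi.
    split; unfold mulv; apply rsum_nonneg; intros; apply Rmult_le_pos; try (apply Hz0; auto).
    apply HA; auto. apply (proj1 HB); auto. }
  assert (Himg : forall j, (j < n)%nat -> inimg m B kap j = false -> z j = 0).
  { intros j Hj Hf. apply NNPP. intro Hne. apply Hsub in Hne; auto. apply Hsupp in Hne; auto.
    apply (In_K m n B K j HB HK Hj) in Hne. fold kap in Hne. congruence. }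
  set (zeta := fun i => mulv n B z i).
  assert (Hzeta : forall i, (i < m)%nat -> zeta i = bb m B (kap i) * z (kap i))
    by (intros; apply (Bz_img m n); auto).
  assert (HzE : forall j, (j < n)%nat -> z j = Emb m B kap zeta j).
  { intros j Hj. unfold Emb. destruct (inimg m B kap j) eqn:E; [|apply Himg; auto].
    destruct (sgm_spec m n B j HB Hj) as [Hs1 [Hs2 _]].
    assert (Hk : kap (sgm m B j) = j) by (unfold inimg in E; apply Nat.eqb_eq; auto).
    rewrite Hzeta by auto. rewrite Hk. field. lra. }
  assert (HMz : forall i, (i < m)%nat -> mulv m M zeta i <= c * zeta i).
  { intros i Hi. unfold M. rewrite <- (A_Emb m n A B kap zeta i HB Hv).
    replace (mulv n A (Emb m B kap zeta) i) with (mulv n A z i)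
      by (unfold mulv; apply rsum_ext; intros; rewrite HzE; auto). unfold zeta; apply Hle; auto. }
  assert (Hzeta0 : forall i, (i < m)%nat -> 0 <= zeta i).
  { intros i Hi. rewrite Hzeta by auto. destruct (Hv i Hi). destruct (sgm_spec m n B _ HB H) as [_ [Hb _]].
    apply Rmult_le_pos; [lra|apply Hz0; auto]. }
  assert (HM : mnonneg m M) by (apply Mk_nonneg with n; auto).
  (* zero propagation along edges *)
  assert (Hstep : forall x x', digraph_edge m (CK m A B K) x x' ->
             zeta (ppi m B K x) = 0 -> zeta (ppi m B K x') = 0).
  { intros x x' [Hx [Hx' Hp]] H0.
    destruct (ppi_spec m n B K x HB HK Hx) as [Hpx _].
    destruct (ppi_spec m n B K x' HB HK Hx') as [Hpx' [Hbx' Hbbx']].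
    rewrite (CK_eq m n A B K HB HK) in Hp by auto.
    destruct (ppi_spec m n B K x HB HK Hx) as [_ [Hbx Hbbx]]. rewrite Hbbx in Hp.
    assert (HA' : 0 < A (ppi m B K x) (kk K x')).
    { apply (Rmult_lt_reg_r (/ B (ppi m B K x) (kk K x))). apply Rinv_0_lt_compat; auto.
      rewrite Rmult_0_l. auto. }
    assert (HMp : 0 < M (ppi m B K x) (ppi m B K x')).
    { unfold M, Mk. fold kap. unfold kap. rewrite (kapK_ppi m n) by auto. rewrite Hbbx'.
      apply Rdiv_lt_0_compat; auto. }
    specialize (HMz _ Hpx). rewrite H0, Rmult_0_r in HMz.
    assert (M (ppi m B K x) (ppi m B K x') * zeta (ppi m B K x') <= mulv m M zeta (ppi m B K x)).
    { unfold mulv. apply (rsum_ge_term m (fun l => M (ppi m B K x) l * zeta l)); auto.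
      intros; apply Rmult_le_pos; auto. }
    pose proof (Hzeta0 _ Hpx'). destruct H1; auto.
    assert (0 < M (ppi m B K x) (ppi m B K x') * zeta (ppi m B K x')) by (apply Rmult_lt_0_compat; auto).
    lra. }
  assert (Hj0K : In j0 K) by (apply Hsupp; auto).
  apply (In_K m n B K j0 HB HK Hj0) in Hj0K. fold kap in Hj0K.
  destruct (sgm_spec m n B j0 HB Hj0) as [Hs0 [Hb0 _]].
  set (l0 := lam m B K (sgm m B j0)).
  destruct (lam_spec m n B K (sgm m B j0) HB HK Hs0) as [Hl0 Hpl0]. fold l0 in Hl0, Hpl0.
  assert (Hz00 : zeta (ppi m B K l0) = 0).
  { rewrite Hpl0, Hzeta by auto. unfold inimg in Hj0K. apply Nat.eqb_eq in Hj0K. rewrite Hj0K, Hzj0. ring. }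
  assert (Hall : forall l, (l < m)%nat -> zeta (ppi m B K l) = 0).
  { assert (Hgen : forall a b, clos_refl_trans nat (digraph_edge m (CK m A B K)) a b ->
       zeta (ppi m B K a) = 0 -> zeta (ppi m B K b) = 0).
    { intros a b Hab. induction Hab; intros; eauto. }
    intros l Hl. apply (Hgen l0); auto. }
  destruct Hznz as [j [Hj Hzj]]. apply Hzj. rewrite HzE by auto. unfold Emb.
  destruct (inimg m B kap j); auto.
  destruct (sgm_spec m n B j HB Hj) as [Hs1 _].
  destruct (lam_spec m n B K (sgm m B j) HB HK Hs1) as [Hl1 Hpl1].
  rewrite <- Hpl1, Hall by auto. unfold Rdiv; ring.
Qed.

Theorem theorem6p5 (m n : nat) (A B : mat) :
  (1 <= m)%nat ->
  WN_pair m n A B ->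
  ((exists K0, in_MB m n B K0 /\
       rhoAB m n A B = Fin (spectral_radius m (CK m A B K0))) /\
   (forall K, in_MB m n B K ->
       Rbar_le (rhoAB m n A B) (Fin (spectral_radius m (CK m A B K))))) /\
  (forall K, in_MB m n B K ->
     rhoAB m n A B = Fin (spectral_radius m (CK m A B K)) ->
     exists y, in_Pi n y /\ supp_in n y K /\ optimal m n A B y /\
               GPF_eigenvector m n A B y) /\
  (S_irreducible m n A B ->
   forall K y, in_MB m n B K ->
     rhoAB m n A B = Fin (spectral_radius m (CK m A B K)) ->
     in_Pi n y -> supp_in n y K -> optimal m n A B y ->
     GPF_eigenvector m n A B y ->
     minimal_optimal m n A B y).
Proof.
  intros Hm [HAB [Hmn [Hrow Hcol]]].
  assert (HB : Bprops m n B) by (split; [intros; apply HAB; auto| split; auto]).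
  assert (HA : forall i j, (i < m)%nat -> (j < n)%nat -> 0 <= A i j) by (intros; apply HAB; auto).
  destruct (hard m n A B Hm HB HA) as [l0 [Hl0 Hlow]].
  set (kap0 := kl l0). assert (Hv0 : valid m n B kap0) by (apply Lall_valid; auto).
  set (c := cw m (Mk m A B kap0)). fold kap0 c in Hlow.
  assert (Hrho : rhoAB m n A B = Fin c) by (apply (rho_value m n A B kap0); auto).
  assert (Hsr : forall K, in_MB m n B K -> spectral_radius m (CK m A B K) = cw m (Mk m A B (kapK m B K)))
    by (intros; apply (sr_CK m n); auto).
  assert (Hge : forall K, in_MB m n B K -> c <= cw m (Mk m A B (kapK m B K))).
  { intros K HK. apply lower_cw with n; auto. apply kapK_valid; auto. }
  rewrite Hrho. split; [split|split].
  - destruct (Kof_inMB m n B kap0 HB Hv0) as [HK0 Heq]. exists (Kof m n B kap0). split; auto.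
    rewrite Hsr by auto. f_equal. unfold c. apply cw_ext. intros i l Hi Hl. unfold Mk. rewrite Heq; auto.
  - intros K HK. rewrite Hsr by auto. simpl. apply Hge; auto.
  - intros K HK HKc. rewrite Hsr in HKc by auto. injection HKc as HKc.
    apply (part2 m n A B K c); auto.
  - intros Hirr K y HK HKc Hpi Hsupp Hopt _. apply (part3 m n A B K c y); auto.
Qed.
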